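(* A countable equivalence structure with bounded character and infinitely many infinite equivalence classes is relatively $\Delta^0_2$ categorical but not relatively $\Delta^0_2$ bi-embeddably categorical.
   Context: An equivalence structure $\mathcal{A}=(A,E)$ has universe $A\subseteq\omega$ and an equivalence relation $E$ on $A$; structures are identified with their atomic diagrams. $\mathcal{A}$ has bounded character if there is a finite $k$ such that all finite equivalence classes have size at most $k$. A countable structure $\mathcal{A}$ is relatively $\Delta^0_2$ categorical if for every structure $\mathcal{B}$ isomorphic to $\mathcal{A}$ there is an isomorphism between them that is $\Delta^0_2$ relative to $\mathcal{A}\oplus\mathcal{B}$. Two structures are bi-embeddable if each embeds into the other; $\mathcal{A}$ is relatively $\Delta^0_2$ bi-embeddably categorical if for every structure $\mathcal{B}$ bi-embeddable with $\mathcal{A}$ there are embeddings $\mathcal{A}\hookrightarrow\mathcal{B}$ and $\mathcal{B}\hookrightarrow\mathcal{A}$ that are $\Delta^0_2$ relative to $\mathcal{A}\oplus\mathcal{B}$. *)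

(* Defs.v *)
From Stdlib Require Import Arith List Cantor.
Import ListNotations.

Inductive code : Type :=
| CZero : code
| CSucc : code
| CProj : nat -> code
| COracle : code
| CComp : code -> list code -> code
| CPrec : code -> code -> code
| CMu : code -> code.

Definition oracle := nat -> bool.

Inductive eval (X : oracle) : code -> list nat -> nat -> Prop :=
| ev_zero xs : eval X CZero xs 0
| ev_succ xs : eval X CSucc xs (S (hd 0 xs))
| ev_proj i xs : eval X (CProj i) xs (nth i xs 0)
| ev_oracle xs : eval X COracle xs (if X (hd 0 xs) then 1 else 0)
| ev_comp f gs xs ys y :
    evals X gs xs ys -> eval X f ys y -> eval X (CComp f gs) xs y
| ev_prec0 f g xs y : eval X f xs y -> eval X (CPrec f g) (0 :: xs) y
| ev_precS f g n xs z y :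
    eval X (CPrec f g) (n :: xs) z -> eval X g (n :: z :: xs) y ->
    eval X (CPrec f g) (S n :: xs) y
| ev_mu f xs n :
    eval X f (n :: xs) 0 ->
    (forall m, m < n -> exists k, eval X f (m :: xs) (S k)) ->
    eval X (CMu f) xs n
with evals (X : oracle) : list code -> list nat -> list nat -> Prop :=
| evs_nil xs : evals X [] xs []
| evs_cons g gs xs y ys :
    eval X g xs y -> evals X gs xs ys -> evals X (g :: gs) xs (y :: ys).

Definition computable_in (X : oracle) (k : nat) (F : list nat -> nat) : Prop :=
  exists c : code, forall xs : list nat, length xs = k -> eval X c xs (F xs).

Definition Sigma02_rel (X : oracle) (R : nat -> nat -> Prop) : Prop :=
  exists r : list nat -> nat, computable_in X 4 r /\
    forall n m, R n m <-> exists a, forall b, r [n; m; a; b] = 0.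

Definition Pi02_rel (X : oracle) (R : nat -> nat -> Prop) : Prop :=
  exists r : list nat -> nat, computable_in X 4 r /\
    forall n m, R n m <-> forall a, exists b, r [n; m; a; b] = 0.

Definition Delta02_fun (X : oracle) (f : nat -> nat) : Prop :=
  Sigma02_rel X (fun n m => f n = m) /\ Pi02_rel X (fun n m => f n = m).

(* A structure in the language {E}: universe A ⊆ omega (given by its
   characteristic function) and a binary relation E on omega
   (only its restriction to A matters). *)
Record structure : Type := Struct { univ : nat -> bool; rel : nat -> nat -> bool }.

Definition is_equivalence_structure (S : structure) : Prop :=
  (forall x, univ S x = true -> rel S x x = true) /\
  (forall x y, univ S x = true -> univ S y = true ->
     rel S x y = true -> rel S y x = true) /\
  (forall x y z, univ S x = true -> univ S y = true -> univ S z = true ->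
     rel S x y = true -> rel S y z = true -> rel S x z = true).

Definition eq_class (S : structure) (x : nat) (y : nat) : Prop :=
  univ S y = true /\ rel S x y = true.

Definition finite_set (P : nat -> Prop) : Prop :=
  exists l : list nat, forall y, P y -> In y l.

Definition bounded_character (S : structure) : Prop :=
  exists k : nat, forall x, univ S x = true -> finite_set (eq_class S x) ->
    forall l : list nat, NoDup l -> (forall y, In y l -> eq_class S x y) ->
      length l <= k.

(* infinitely many infinite classes: no finite list of elements meets
   every infinite class *)
Definition infinitely_many_infinite_classes (S : structure) : Prop :=
  ~ exists l : list nat, forall x, univ S x = true -> ~ finite_set (eq_class S x) ->
      exists y, In y l /\ univ S y = true /\ rel S x y = true.

(* D(S): 2x codes "x ∈ A", 2<x,y>+1 codes "x E y". *)
Definition diagram (S : structure) : oracle :=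
  fun n => if Nat.even n then univ S (Nat.div2 n)
           else let '(x, y) := Cantor.of_nat (Nat.div2 n) in rel S x y.

Definition join (X Y : oracle) : oracle :=
  fun n => if Nat.even n then X (Nat.div2 n) else Y (Nat.div2 n).

Definition is_embedding (S T : structure) (f : nat -> nat) : Prop :=
  (forall x, univ S x = true -> univ T (f x) = true) /\
  (forall x y, univ S x = true -> univ S y = true -> f x = f y -> x = y) /\
  (forall x y, univ S x = true -> univ S y = true ->
     rel S x y = rel T (f x) (f y)).

Definition is_isomorphism (S T : structure) (f : nat -> nat) : Prop :=
  is_embedding S T f /\
  (forall z, univ T z = true -> exists x, univ S x = true /\ f x = z).

Definition isomorphic (S T : structure) : Prop := exists f, is_isomorphism S T f.

Definition bi_embeddable (S T : structure) : Prop :=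
  (exists f, is_embedding S T f) /\ (exists g, is_embedding T S g).

Definition rel_Delta02_categorical (S : structure) : Prop :=
  forall T : structure, isomorphic S T ->
    exists f, is_isomorphism S T f /\
      Delta02_fun (join (diagram S) (diagram T)) f.

Definition rel_Delta02_biemb_categorical (S : structure) : Prop :=
  forall T : structure, bi_embeddable S T ->
    exists f g, is_embedding S T f /\ is_embedding T S g /\
      Delta02_fun (join (diagram S) (diagram T)) f /\
      Delta02_fun (join (diagram S) (diagram T)) g.

(* Main.v *)
Require Import Defs.
From Stdlib Require Import Arith List Cantor.
From Stdlib Require Import Lia Classical ClassicalEpsilon Bool.
Import ListNotations.

Inductive exp : Type :=
| EVar (i : nat) | EConst (n : nat) | EAdd (a b : exp) | ESub (a b : exp)
| EIsZ (a : exp) | EIf (c t e : exp) | EOr (a : exp) | ESum (bnd body : exp).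

Fixpoint sumto (f : nat -> nat) (n : nat) : nat :=
  match n with 0 => 0 | S n => sumto f n + f n end.

Fixpoint sem (X : oracle) (env : list nat) (e : exp) : nat :=
  match e with
  | EVar i => nth i env 0
  | EConst n => n
  | EAdd a b => sem X env a + sem X env b
  | ESub a b => sem X env a - sem X env b
  | EIsZ a => match sem X env a with 0 => 1 | _ => 0 end
  | EIf c t e => match sem X env c with 0 => sem X env e | _ => sem X env t end
  | EOr a => if X (sem X env a) then 1 else 0
  | ESum bnd body => sumto (fun i => sem X (i :: env) body) (sem X env bnd)
  end.

Definition add_c := CPrec (CProj 0) (CComp CSucc [CProj 1]).
Definition pred_c := CPrec CZero (CProj 0).
Definition sub_c := CPrec (CProj 0) (CComp pred_c [CProj 1]).
Definition isz_c := CPrec (CComp CSucc [CZero]) CZero.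
Definition ids n := map CProj (seq 0 n).
Definition shift2 n := map CProj (seq 2 n).

Fixpoint comp (n : nat) (e : exp) : code :=
  match e with
  | EVar i => CProj i
  | EConst k => Nat.iter k (fun c => CComp CSucc [c]) CZero
  | EAdd a b => CComp add_c [comp n a; comp n b]
  | ESub a b => CComp sub_c [comp n b; comp n a]
  | EIsZ a => CComp isz_c [comp n a]
  | EIf c t e => CComp (CPrec (comp n e) (CComp (comp n t) (shift2 n))) (comp n c :: ids n)
  | EOr a => CComp COracle [comp n a]
  | ESum bnd body =>
      CComp (CPrec CZero (CComp add_c [CProj 1; CComp (comp (S n) body) (CProj 0 :: shift2 n)]))
            (comp n bnd :: ids n)
  end.

Lemma evals_proj X : forall l pre, evals X (map CProj (seq (length pre) (length l))) (pre ++ l) l.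
Proof.
  induction l as [|a l IH]; intros pre; simpl.
  - constructor.
  - constructor.
    + replace a with (nth (length pre) (pre ++ a :: l) 0) at 2.
      * constructor.
      * rewrite app_nth2 by lia. rewrite Nat.sub_diag. reflexivity.
    + specialize (IH (pre ++ [a])). rewrite <- app_assoc in IH. simpl in IH.
      rewrite length_app in IH. simpl in IH. rewrite Nat.add_1_r in IH. exact IH.
Qed.

Lemma evals_ids X env : evals X (ids (length env)) env env.
Proof. exact (evals_proj X env []). Qed.

Lemma evals_shift2 X a b env : evals X (shift2 (length env)) (a :: b :: env) env.
Proof. exact (evals_proj X env [a; b]). Qed.

Lemma add_c_ok X a b : eval X add_c [a; b] (a + b).
Proof.
  induction a; simpl.
  - apply ev_prec0. change b with (nth 0 [b] 0) at 2. constructor.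
  - eapply ev_precS. exact IHa.
    eapply ev_comp. constructor. change (a + b) with (nth 1 [a; a + b; b] 0). constructor. constructor.
    constructor.
Qed.


Lemma pred_c_ok X a : eval X pred_c [a] (pred a).
Proof.
  assert (H : forall a, exists z, eval X pred_c [a] z) .
  { induction a0. exists 0. apply ev_prec0; constructor.
    destruct IHa0 as [z Hz]. exists a0. eapply ev_precS. exact Hz.
    change a0 with (nth 0 [a0; z] 0) at 2. constructor. }
  destruct a; simpl.
  - apply ev_prec0. constructor.
  - destruct (H a) as [z Hz]. eapply ev_precS. exact Hz.
    change a with (nth 0 [a; z] 0) at 2. constructor.
Qed.

Lemma sub_c_ok X a b : eval X sub_c [b; a] (a - b).
Proof.
  induction b; simpl.
  - rewrite Nat.sub_0_r. apply ev_prec0. change a with (nth 0 [a] 0) at 2. constructor.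
  - eapply ev_precS. exact IHb.
    replace (a - S b) with (pred (a - b)) by lia.
    eapply ev_comp. constructor. change (a - b) with (nth 1 [b; a - b; a] 0). constructor. constructor.
    apply pred_c_ok.
Qed.

Lemma isz_c_ok X a : eval X isz_c [a] (match a with 0 => 1 | _ => 0 end).
Proof.
  destruct a.
  - apply ev_prec0. eapply ev_comp. constructor. constructor. constructor. constructor.
  - assert (H : exists z, eval X isz_c [a] z).
    { destruct a. exists 1. apply ev_prec0. eapply ev_comp. constructor. constructor. constructor. constructor.
      clear. induction a. exists 0. eapply ev_precS. apply ev_prec0. eapply ev_comp. constructor. constructor. constructor. constructor. constructor.
      destruct IHa as [z Hz]. exists 0. eapply ev_precS. exact Hz. constructor. }
    destruct H as [z Hz]. eapply ev_precS. exact Hz. constructor.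
Qed.

Lemma iter_const_ok X env k : eval X (Nat.iter k (fun c => CComp CSucc [c]) CZero) env k.
Proof.
  induction k; simpl. constructor.
  eapply ev_comp. constructor. exact IHk. constructor. constructor.
Qed.

Theorem comp_ok X : forall e env, eval X (comp (length env) e) env (sem X env e).
Proof.
  induction e; intros env; simpl.
  - constructor.
  - apply iter_const_ok.
  - eapply ev_comp. constructor. apply IHe1. constructor. apply IHe2. constructor. apply add_c_ok.
  - eapply ev_comp. constructor. apply IHe2. constructor. apply IHe1. constructor. apply sub_c_ok.
  - eapply ev_comp. constructor. apply IHe. constructor. apply isz_c_ok.
  - eapply ev_comp. constructor. apply IHe1. apply evals_ids.
    assert (G : forall m, eval X (CPrec (comp (length env) e3) (CComp (comp (length env) e2) (shift2 (length env)))) (m :: env)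
                 (match m with 0 => sem X env e3 | _ => sem X env e2 end)).
    { induction m. apply ev_prec0. apply IHe3.
      eapply ev_precS. exact IHm. eapply ev_comp. apply evals_shift2. apply IHe2. }
    specialize (G (sem X env e1)). destruct (sem X env e1); exact G.
  - eapply ev_comp. constructor. apply IHe. constructor. apply ev_oracle.
  - eapply ev_comp. constructor. apply IHe1. apply evals_ids.
    generalize (sem X env e1) as m. induction m; simpl.
    + apply ev_prec0. constructor.
    + eapply ev_precS. exact IHm.
      set (z := sumto (fun i : nat => sem X (i :: env) e2) m).
      apply ev_comp with (ys := [z; sem X (m :: env) e2]).
      * constructor. change z with (nth 1 (m :: z :: env) 0) at 2. constructor.
        constructor. eapply ev_comp. constructor. constructor. apply evals_shift2.
        apply (IHe2 (m :: env)). constructor.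
      * apply add_c_ok.
Qed.

Section CodeInd.
Variable P : code -> Prop.
Hypotheses (H0 : P CZero) (H1 : P CSucc) (H2 : forall i, P (CProj i)) (H3 : P COracle)
  (H4 : forall f gs, P f -> Forall P gs -> P (CComp f gs))
  (H5 : forall f g, P f -> P g -> P (CPrec f g))
  (H6 : forall f, P f -> P (CMu f)).
Fixpoint code_ind' (c : code) : P c :=
  match c with
  | CZero => H0 | CSucc => H1 | CProj i => H2 i | COracle => H3
  | CComp f gs => H4 f gs (code_ind' f)
      ((fix aux (l : list code) : Forall P l :=
          match l with [] => Forall_nil P | g :: l => Forall_cons g (code_ind' g) (aux l) end) gs)
  | CPrec f g => H5 f g (code_ind' f) (code_ind' g)
  | CMu f => H6 f (code_ind' f)
  end.
End CodeInd.

Set Implicit Arguments.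
Lemma inv_zero X xs y : eval X CZero xs y -> y = 0.
Proof. intros H; inversion H; auto. Qed.
Lemma inv_succ X xs y : eval X CSucc xs y -> y = S (hd 0 xs).
Proof. intros H; inversion H; auto. Qed.
Lemma inv_proj X i xs y : eval X (CProj i) xs y -> y = nth i xs 0.
Proof. intros H; inversion H; auto. Qed.
Lemma inv_oracle X xs y : eval X COracle xs y -> y = (if X (hd 0 xs) then 1 else 0).
Proof. intros H; inversion H; auto. Qed.
Lemma inv_comp X f gs xs y : eval X (CComp f gs) xs y -> exists ys, evals X gs xs ys /\ eval X f ys y.
Proof. intros H; inversion H; subst; eauto. Qed.
Lemma inv_nil X f g y : eval X (CPrec f g) [] y -> False.
Proof. intros H; inversion H. Qed.
Lemma inv_prec0 X f g xs y : eval X (CPrec f g) (0 :: xs) y -> eval X f xs y.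
Proof. intros H; inversion H; auto. Qed.
Lemma inv_precS X f g n xs y : eval X (CPrec f g) (S n :: xs) y ->
  exists z, eval X (CPrec f g) (n :: xs) z /\ eval X g (n :: z :: xs) y.
Proof. intros H; inversion H; subst; eauto. Qed.
Lemma inv_mu X f xs n : eval X (CMu f) xs n ->
  eval X f (n :: xs) 0 /\ (forall m, m < n -> exists k, eval X f (m :: xs) (S k)).
Proof. intros H; inversion H; subst; auto. Qed.
Lemma inv_evals_nil X xs ys : evals X [] xs ys -> ys = [].
Proof. intros H; inversion H; auto. Qed.
Lemma inv_evals_cons X g gs xs ys : evals X (g :: gs) xs ys ->
  exists y ys', ys = y :: ys' /\ eval X g xs y /\ evals X gs xs ys'.
Proof. intros H; inversion H; subst; eauto 6. Qed.

Unset Implicit Arguments.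
Lemma eval_det X : forall c xs y, eval X c xs y -> forall y', eval X c xs y' -> y = y'.
Proof.
  induction c using code_ind'; intros xs y Hy y' Hy'.
  - rewrite (inv_zero Hy), (inv_zero Hy'); auto.
  - rewrite (inv_succ Hy), (inv_succ Hy'); auto.
  - rewrite (inv_proj Hy), (inv_proj Hy'); auto.
  - rewrite (inv_oracle Hy), (inv_oracle Hy'); auto.
  - destruct (inv_comp Hy) as [ys [A B]]. destruct (inv_comp Hy') as [ys' [A' B']].
    assert (ys = ys').
    { clear - H A A'. revert ys ys' A A'. induction H; intros ys ys' A A'.
      - rewrite (inv_evals_nil A), (inv_evals_nil A'); auto.
      - destruct (inv_evals_cons A) as [y1 [l1 [E1 [F1 G1]]]].
        destruct (inv_evals_cons A') as [y2 [l2 [E2 [F2 G2]]]]. subst. f_equal; eauto. }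
    subst. eauto.
  - destruct xs as [|n xs']. { destruct (inv_nil Hy). }
    revert y y' Hy Hy'. induction n; intros y y' Hy Hy'.
    + apply inv_prec0 in Hy. apply inv_prec0 in Hy'. eauto.
    + destruct (inv_precS Hy) as [z [A B]]. destruct (inv_precS Hy') as [z' [A' B']].
      assert (z = z') by eauto. subst. eauto.
  - destruct (inv_mu Hy) as [A B]. destruct (inv_mu Hy') as [A' B'].
    destruct (lt_eq_lt_dec y y') as [[Hl|He]|Hl]; auto.
    + destruct (B' y Hl) as [k Hk]. specialize (IHc _ _ A _ Hk). discriminate.
    + destruct (B y' Hl) as [k Hk]. specialize (IHc _ _ A' _ Hk). discriminate.
Qed.

Definition agree (X Y : oracle) (U : list nat) := forall u, In u U -> Y u = X u.

Lemma agree_app X Y U V : agree X Y (U ++ V) -> agree X Y U /\ agree X Y V.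
Proof. unfold agree; split; intros; apply H; apply in_or_app; auto. Qed.

Lemma eval_use X : forall c xs y, eval X c xs y -> exists U, forall Y, agree X Y U -> eval Y c xs y.
Proof.
  induction c using code_ind'; intros xs y Hy.
  - rewrite (inv_zero Hy). exists []. intros; constructor.
  - rewrite (inv_succ Hy). exists []. intros; constructor.
  - rewrite (inv_proj Hy). exists []. intros; constructor.
  - rewrite (inv_oracle Hy). exists [hd 0 xs]. intros Y HY.
    rewrite <- (HY (hd 0 xs)) by (left; auto). constructor.
  - destruct (inv_comp Hy) as [ys [A B]].
    assert (HU : exists U, forall Y, agree X Y U -> evals Y gs xs ys).
    { clear - H A. revert ys A. induction H; intros ys A.
      - rewrite (inv_evals_nil A). exists []. intros; constructor.
      - destruct (inv_evals_cons A) as [y1 [l1 [E1 [F1 G1]]]]. subst.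
        destruct (H _ _ F1) as [U1 HU1]. destruct (IHForall _ G1) as [U2 HU2].
        exists (U1 ++ U2). intros Y HY. apply agree_app in HY. constructor; intuition. }
    destruct HU as [U1 HU1]. destruct (IHc _ _ B) as [U2 HU2].
    exists (U1 ++ U2). intros Y HY. apply agree_app in HY. econstructor; intuition.
  - destruct xs as [|n xs']. { destruct (inv_nil Hy). }
    revert y Hy. induction n; intros y Hy.
    + apply inv_prec0 in Hy. destruct (IHc1 _ _ Hy) as [U HU]. exists U. intros Y HY. constructor; auto.
    + destruct (inv_precS Hy) as [z [A B]]. destruct (IHn _ A) as [U1 HU1]. destruct (IHc2 _ _ B) as [U2 HU2].
      exists (U1 ++ U2). intros Y HY. apply agree_app in HY. econstructor; intuition.
  - destruct (inv_mu Hy) as [A B]. destruct (IHc _ _ A) as [U1 HU1].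
    assert (HU : forall n, n <= y -> exists U, forall Y, agree X Y U ->
              forall m, m < n -> exists k, eval Y c (m :: xs) (S k)).
    { induction n; intros Hn.
      - exists []. intros; lia.
      - destruct IHn as [U2 HU2]; [lia|]. destruct (B n) as [k Hk]; [lia|].
        destruct (IHc _ _ Hk) as [U3 HU3]. exists (U2 ++ U3). intros Y HY m Hm.
        apply agree_app in HY. destruct (Nat.eq_dec m n).
        + subst. exists k. intuition.
        + apply HU2; intuition; lia. }
    destruct (HU y (le_n _)) as [U2 HU2]. exists (U1 ++ U2). intros Y HY.
    apply agree_app in HY. constructor; intuition.
Qed.

Fixpoint encl (e : code -> nat) (l : list code) : nat :=
  match l with [] => 0 | g :: l => S (to_nat (e g, encl e l)) end.

Fixpoint enc (c : code) : nat :=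
  match c with
  | CZero => to_nat (0, 0) | CSucc => to_nat (1, 0) | CProj i => to_nat (2, i)
  | COracle => to_nat (3, 0)
  | CComp f gs => to_nat (4, to_nat (enc f, encl enc gs))
  | CPrec f g => to_nat (5, to_nat (enc f, enc g))
  | CMu f => to_nat (6, enc f)
  end.

Lemma enc_inj : forall c c', enc c = enc c' -> c = c'.
Proof.
  induction c using code_ind'; intros c' E; destruct c'; cbn [enc] in E;
    apply to_nat_inj in E; apply pair_equal_spec in E; destruct E as [E0 E]; try discriminate; auto.
  - apply to_nat_inj in E. apply pair_equal_spec in E. destruct E as [E1 E2].
    f_equal; auto.
    clear - H E2. revert l E2. induction H as [|g gs Hg Hgs IH]; intros l' E; destruct l'; cbn [encl] in E; try discriminate; auto.
    apply Nat.succ_inj in E. rename E into E1. apply to_nat_inj in E1. apply pair_equal_spec in E1. destruct E1. f_equal; auto.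
  - apply to_nat_inj in E. apply pair_equal_spec in E. destruct E. f_equal; auto.
  - f_equal; auto.
Qed.

Definition decode (n : nat) : code := epsilon (inhabits CZero) (fun c => enc c = n).

Lemma decode_enc c : decode (enc c) = c.
Proof.
  unfold decode. apply enc_inj. apply (epsilon_spec (inhabits CZero) (fun c' => enc c' = enc c)).
  exists c; auto.
Qed.

Unset Implicit Arguments. Set Strict Implicit.

Definition cntp (p : nat -> bool) (N : nat) : nat := sumto (fun w => if p w then 1 else 0) N.

Lemma cntp_S p N : cntp p (S N) = cntp p N + (if p N then 1 else 0).
Proof. reflexivity. Qed.

Lemma cntp_mono p a b : a <= b -> cntp p a <= cntp p b.
Proof. induction 1; auto. rewrite cntp_S. lia. Qed.

Lemma cntp_lt p w w' : p w = true -> w < w' -> cntp p w < cntp p w'.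
Proof. intros H L. apply Nat.lt_le_trans with (cntp p (S w)). rewrite cntp_S, H. lia. apply cntp_mono. lia. Qed.

Arguments cntp_lt p {w w'}.

Lemma cntp_inj p w w' : p w = true -> p w' = true -> cntp p w = cntp p w' -> w = w'.
Proof.
  intros H H' E. destruct (lt_eq_lt_dec w w') as [[L|L]|L]; auto.
  - pose proof (cntp_lt p H L). lia.
  - pose proof (cntp_lt p H' L). lia.
Qed.

Lemma cntp_filter p N : cntp p N = length (filter p (seq 0 N)).
Proof.
  induction N; auto. rewrite cntp_S, seq_S, filter_app, length_app, IHN. simpl.
  destruct (p N); simpl; lia.
Qed.

Lemma cntp_ext p q N : (forall w, w < N -> p w = q w) -> cntp p N = cntp q N.
Proof. induction N; intros H; auto. rewrite !cntp_S, IHN, H; auto. Qed.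

Lemma cntp_le_list p N l : NoDup l -> (forall w, In w l -> p w = true /\ w < N) -> length l <= cntp p N.
Proof.
  intros D H. rewrite cntp_filter. apply NoDup_incl_length; auto.
  intros w Hw. apply filter_In. destruct (H w Hw). split; auto. apply in_seq. lia.
Qed.

Lemma cntp_ivt p N r : r < cntp p N -> exists w, w < N /\ p w = true /\ cntp p w = r.
Proof.
  induction N; intros H. simpl in H. unfold cntp in H; simpl in H; lia.
  rewrite cntp_S in H. destruct (lt_dec r (cntp p N)) as [L|L].
  - destruct (IHN L) as [w [A [B C]]]. exists w; repeat split; auto.
  - destruct (p N) eqn:E; [|lia]. exists N. repeat split; auto. lia.
Qed.

Lemma list_max_lt_S l w : In w l -> w < S (list_max l).
Proof.
  intros H. assert (w <= list_max l); [|lia].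
  assert (A := proj1 (list_max_le l (list_max l)) (le_n _)). rewrite Forall_forall in A. auto.
Qed.

Lemma cntp_real p r : (exists w, p w = true /\ cntp p w = r) <->
  (exists l, NoDup l /\ length l = S r /\ forall w, In w l -> p w = true).
Proof.
  split.
  - intros [w [H E]]. exists (filter p (seq 0 (S w))). repeat split.
    + apply NoDup_filter, seq_NoDup.
    + rewrite <- cntp_filter, cntp_S, H, E. lia.
    + intros v Hv. apply filter_In in Hv. tauto.
  - intros [l [D [L H]]].
    assert (A : length l <= cntp p (S (list_max l))).
    { apply cntp_le_list; auto. intros w Hw. split; auto. apply list_max_lt_S; auto. }
    destruct (cntp_ivt p (S (list_max l)) r) as [w [_ [B C]]]. lia. eauto.
Qed.

Lemma cntp_all (q : nat -> bool) M : (forall w, w < M -> q w = true) -> cntp q M = M.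
Proof. induction M; intros H; auto. rewrite cntp_S, IHM, H; auto. lia. Qed.

Lemma first_false (q : nat -> bool) N :
  (forall w, q (S w) = true -> q w = true) -> q N = false ->
  exists mu, q mu = false /\ (forall w, w < mu -> q w = true) /\ cntp q N = mu.
Proof.
  intros A. induction N; intros H.
  - exists 0. repeat split; auto. intros; lia.
  - destruct (q N) eqn:E.
    + exists (S N). repeat split; auto.
      * intros w Hw. assert (G : forall d, q (N - d) = true).
        { induction d. rewrite Nat.sub_0_r; auto.
          destruct (le_lt_dec N d). replace (N - S d) with (N - d) by lia. auto.
          apply A. replace (S (N - S d)) with (N - d) by lia. auto. }
        replace w with (N - (N - w)) by lia. auto.
      * apply cntp_all. intros w Hw. assert (G : forall d, q (N - d) = true).
        { induction d. rewrite Nat.sub_0_r; auto.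
          destruct (le_lt_dec N d). replace (N - S d) with (N - d) by lia. auto.
          apply A. replace (S (N - S d)) with (N - d) by lia. auto. }
        replace w with (N - (N - w)) by lia. auto.
    + destruct (IHN eq_refl) as [mu [B [C D]]]. exists mu. repeat split; auto. rewrite cntp_S, D, E. lia.
Qed.

Set Implicit Arguments. Unset Strict Implicit.
Definition inC (U : structure) x w := univ U w && rel U x w.
Definition cnt U x b := cntp (inC U x) b.
Definition tb U k x b := if cnt U x b <=? k then cnt U x b else S k.
Definition lst U x := cntp (fun w => cnt U x (S w) =? 0) x.
Definition isl U w := univ U w && (lst U w =? w).
Definition ps U x := cnt U x x.

Lemma inC_refl U x : is_equivalence_structure U -> univ U x = true -> inC U x x = true.
Proof. intros [R _] H. unfold inC. rewrite H, R; auto. Qed.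

Lemma inC_class U x y : is_equivalence_structure U -> univ U x = true -> univ U y = true ->
  rel U x y = true -> forall w, inC U x w = inC U y w.
Proof.
  intros [R [Sy Tr]] Hx Hy Hxy w. unfold inC. destruct (univ U w) eqn:Hw; auto; simpl.
  destruct (rel U x w) eqn:E1, (rel U y w) eqn:E2; auto.
  - rewrite <- E2. symmetry. apply (Tr y x w); auto.
  - rewrite <- E1. apply (Tr x y w); auto.
Qed.

Lemma inC_rel U x w : inC U x w = true -> univ U w = true /\ rel U x w = true.
Proof. unfold inC. intros H. apply andb_prop in H. auto. Qed.

Lemma lst_spec U x : is_equivalence_structure U -> univ U x = true ->
  inC U x (lst U x) = true /\ forall w, w < lst U x -> inC U x w = false.
Proof.
  intros EQ Hx.
  destruct (first_false (fun w => cnt U x (S w) =? 0) x) as [mu [A [B C]]].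
  - intros w H. apply Nat.eqb_eq in H. apply Nat.eqb_eq. unfold cnt in *.
    pose proof (cntp_mono (inC U x) (S w) (S (S w))). lia.
  - apply Nat.eqb_neq. unfold cnt. rewrite cntp_S, inC_refl; auto. lia.
  - unfold lst. rewrite C.
    assert (Z : cnt U x mu = 0).
    { destruct mu. reflexivity. specialize (B mu (le_n _)). apply Nat.eqb_eq in B. auto. }
    apply Nat.eqb_neq in A. unfold cnt in A, Z. rewrite cntp_S, Z in A. split.
    + destruct (inC U x mu); auto; lia.
    + intros w Hw. destruct (inC U x w) eqn:E; auto.
      pose proof (cntp_lt (inC U x) E Hw). lia.
Qed.

Lemma least_unique (P : nat -> bool) a b : P a = true -> (forall w, w < a -> P w = false) ->
  P b = true -> (forall w, w < b -> P w = false) -> a = b.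
Proof.
  intros A A' B B'. destruct (lt_eq_lt_dec a b) as [[L|L]|L]; auto.
  - rewrite B' in A; auto; discriminate.
  - rewrite A' in B; auto; discriminate.
Qed.

Lemma lst_class U x y : is_equivalence_structure U -> univ U x = true -> univ U y = true ->
  rel U x y = true -> lst U x = lst U y.
Proof.
  intros EQ Hx Hy Hxy. destruct (lst_spec EQ Hx) as [A A']. destruct (lst_spec EQ Hy) as [B B'].
  apply (@least_unique (inC U x)); auto.
  - rewrite (inC_class EQ Hx Hy Hxy); auto.
  - intros w Hw. rewrite (inC_class EQ Hx Hy Hxy); auto.
Qed.

Lemma cnt_class U x y b : is_equivalence_structure U -> univ U x = true -> univ U y = true ->
  rel U x y = true -> cnt U x b = cnt U y b.
Proof. intros. unfold cnt. apply cntp_ext. intros. apply inC_class; auto. Qed.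

Lemma tb_class U k x y b : is_equivalence_structure U -> univ U x = true -> univ U y = true ->
  rel U x y = true -> tb U k x b = tb U k y b.
Proof. intros. unfold tb. rewrite (cnt_class b H H0 H1 H2). auto. Qed.

Lemma tb_mono U k x b b' : b <= b' -> tb U k x b <= tb U k x b'.
Proof.
  intros L. pose proof (cntp_mono (inC U x) b b' L). unfold tb, cnt in *.
  destruct (Nat.leb_spec (cntp (inC U x) b) k); destruct (Nat.leb_spec (cntp (inC U x) b') k); lia.
Qed.

Lemma tb_le U k x b : tb U k x b <= S k.
Proof. unfold tb. destruct (Nat.leb_spec (cnt U x b) k); lia. Qed.

Lemma stab (g : nat -> nat) K : (forall b b', b <= b' -> g b <= g b') -> (forall b, g b <= K) ->
  exists b0, forall b, b0 <= b -> g b = g b0.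
Proof.
  intros M B. assert (G : forall d s, K - g s <= d -> exists b0, forall b, b0 <= b -> g b = g b0).
  { induction d; intros s Hs.
    - exists s. intros b Hb. pose proof (M _ _ Hb). pose proof (B b). lia.
    - destruct (classic (exists b, s <= b /\ g b <> g s)) as [[b [Hb1 Hb2]]|N].
      + apply (IHd b). pose proof (M _ _ Hb1). pose proof (B b). lia.
      + exists s. intros b Hb. destruct (Nat.eq_dec (g b) (g s)); auto. exfalso; eauto. }
  apply (G K 0). lia.
Qed.

Definition bstab U k x : nat :=
  epsilon (inhabits 0) (fun b0 => forall b, b0 <= b -> tb U k x b = tb U k x b0).
Definition ty U k x : nat := tb U k x (bstab U k x).

Lemma ty_spec U k x b : bstab U k x <= b -> tb U k x b = ty U k x.
Proof.
  unfold ty, bstab. apply (epsilon_spec (inhabits 0) (fun b0 => forall b, b0 <= b -> tb U k x b = tb U k x b0)).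
  apply (@stab (tb U k x) (S k)). intros; apply tb_mono; auto. apply tb_le.
Qed.

Lemma ty_le U k x : ty U k x <= S k.
Proof. apply tb_le. Qed.

Definition hasN U x j := exists l, NoDup l /\ length l = j /\ forall w, In w l -> inC U x w = true.

Lemma hasN_le U x j j' : j' <= j -> hasN U x j -> hasN U x j'.
Proof.
  intros L [l [D [E H]]]. exists (firstn j' l). repeat split.
  - rewrite <- (firstn_skipn j' l) in D. eapply NoDup_app_remove_r; eauto.
  - rewrite length_firstn. lia.
  - intros w Hw. apply H. rewrite <- (firstn_skipn j' l). apply in_or_app. auto.
Qed.

Lemma ty_hasN U k x j : j <= S k -> (j <= ty U k x <-> hasN U x j).
Proof.
  intros J. split.
  - intros H. unfold ty in H. set (b0 := bstab U k x) in *.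
    assert (C : j <= cnt U x b0).
    { unfold tb in H. destruct (Nat.leb_spec (cnt U x b0) k); lia. }
    apply (hasN_le (j := cnt U x b0)); auto.
    exists (filter (inC U x) (seq 0 b0)). repeat split.
    + apply NoDup_filter, seq_NoDup.
    + unfold cnt. rewrite cntp_filter. auto.
    + intros w Hw. apply filter_In in Hw. tauto.
  - intros [l [D [E H]]]. set (b := S (list_max l) + bstab U k x).
    rewrite <- (@ty_spec U k x b) by (unfold b; lia).
    assert (C : length l <= cnt U x b).
    { apply cntp_le_list; auto. intros w Hw. split; auto.
      pose proof (list_max_lt_S l w Hw). unfold b. lia. }
    unfold tb. destruct (Nat.leb_spec (cnt U x b) k); lia.
Qed.

Lemma ty_class U k x y : is_equivalence_structure U -> univ U x = true -> univ U y = true ->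
  rel U x y = true -> ty U k x = ty U k y.
Proof.
  intros EQ Hx Hy Hxy. rewrite <- (@ty_spec U k x (bstab U k x + bstab U k y)) by lia.
  rewrite <- (@ty_spec U k y (bstab U k x + bstab U k y)) by lia. apply tb_class; auto.
Qed.

Unset Implicit Arguments. Set Strict Implicit.
Set Implicit Arguments. Unset Strict Implicit.

Lemma iso_inv U V h : is_isomorphism U V h -> exists g, is_isomorphism V U g /\
  (forall x, univ U x = true -> g (h x) = x) /\ (forall y, univ V y = true -> h (g y) = y).
Proof.
  intros [[Hu [Hi Hr]] Hs].
  set (g := fun y => epsilon (inhabits 0) (fun x => univ U x = true /\ h x = y)).
  assert (G : forall y, univ V y = true -> univ U (g y) = true /\ h (g y) = y).
  { intros y Hy. apply (epsilon_spec (inhabits 0) (fun x => univ U x = true /\ h x = y)). auto. }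
  exists g. split; [split; [split; [|split]|]|split].
  - intros y Hy. apply G; auto.
  - intros y y' Hy Hy' E. rewrite <- (proj2 (G y Hy)), <- (proj2 (G y' Hy')), E. auto.
  - intros y y' Hy Hy'. rewrite <- (proj2 (G y Hy)) at 1. rewrite <- (proj2 (G y' Hy')) at 1.
    symmetry. apply Hr; apply G; auto.
  - intros x Hx. exists (h x). split; auto. apply Hi; auto. apply G; auto. apply G; auto.
  - intros x Hx. apply Hi; auto. apply G; auto. apply G; auto.
  - intros y Hy. apply G; auto.
Qed.

Lemma iso_equiv U V h : is_equivalence_structure U -> is_isomorphism U V h -> is_equivalence_structure V.
Proof.
  intros [R [Sy Tr]] [[Hu [Hi Hr]] Hs]. split; [|split].
  - intros y Hy. destruct (Hs y Hy) as [x [Hx E]]. subst. rewrite <- Hr; auto.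
  - intros y y' Hy Hy' E. destruct (Hs y Hy) as [x [Hx Ex]]. destruct (Hs y' Hy') as [x' [Hx' Ex']]. subst.
    rewrite <- Hr in *; auto.
  - intros y y' y'' Hy Hy' Hy'' E E'. destruct (Hs y Hy) as [x [Hx Ex]]. destruct (Hs y' Hy') as [x' [Hx' Ex']].
    destruct (Hs y'' Hy'') as [x'' [Hx'' Ex'']]. subst. rewrite <- Hr in *; eauto.
Qed.

Lemma iso_hasN U V h x j : is_isomorphism U V h -> univ U x = true -> hasN U x j -> hasN V (h x) j.
Proof.
  intros [[Hu [Hi Hr]] Hs] Hx [l [D [L H]]]. exists (map h l). repeat split.
  - apply NoDup_map_NoDup_ForallPairs; auto. intros a b Ha Hb E.
    apply Hi; auto; apply (inC_rel (H _ Ha)) || apply (inC_rel (H _ Hb)).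
  - rewrite length_map; auto.
  - intros w' Hw'. apply in_map_iff in Hw'. destruct Hw' as [w [E Hw]]. subst.
    destruct (inC_rel (H w Hw)) as [A B]. unfold inC. rewrite Hu, <- Hr; auto.
Qed.

Lemma le_ext a b K : a <= K -> b <= K -> (forall j, j <= K -> (j <= a <-> j <= b)) -> a = b.
Proof. intros A B H. pose proof (H a A). pose proof (H b B). lia. Qed.

Lemma iso_ty U V h g k x : is_isomorphism U V h -> is_isomorphism V U g ->
  (forall x, univ U x = true -> g (h x) = x) -> univ U x = true -> ty V k (h x) = ty U k x.
Proof.
  intros I J GH Hx. apply (@le_ext _ _ (S k)); try apply ty_le. intros j Hj.
  rewrite !ty_hasN by auto. split; intros A.
  - rewrite <- (GH x Hx). apply (iso_hasN J); auto. destruct I as [[Hu _] _]. auto.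
  - apply (iso_hasN I); auto.
Qed.

Lemma ty_hasN1 U k x j : j <= S k -> j <= ty U k x -> hasN U x j.
Proof. intros. apply (proj1 (@ty_hasN U k x j H)); auto. Qed.
Lemma ty_hasN2 U k x j : j <= S k -> hasN U x j -> j <= ty U k x.
Proof. intros. apply (proj2 (@ty_hasN U k x j H)); auto. Qed.

Definition Binf U k := forall x, univ U x = true -> hasN U x (S k) -> forall n, hasN U x n.

Lemma Binf_of_bc U : is_equivalence_structure U ->
  forall k, (forall x, univ U x = true -> finite_set (eq_class U x) ->
      forall l, NoDup l -> (forall y, In y l -> eq_class U x y) -> length l <= k) -> Binf U k.
Proof.
  intros EQ k B x Hx [l0 [D0 [L0 H0]]].
  assert (NF : ~ finite_set (eq_class U x)).
  { intros F. assert (length l0 <= k).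
    { apply (B x Hx F l0 D0). intros y Hy. destruct (inC_rel (H0 y Hy)). split; auto. }
    lia. }
  induction n.
  - exists []. repeat split; auto. constructor.
  - destruct IHn as [l [D [L H]]].
    destruct (classic (exists y, eq_class U x y /\ ~ In y l)) as [[y [Hy Hn]]|N].
    + exists (y :: l). repeat split. constructor; auto. simpl; auto.
      intros w [E|Hw]. subst. unfold inC. destruct Hy as [A B']. rewrite A, B'; auto. auto.
    + exfalso. apply NF. exists l. intros y Hy. destruct (classic (In y l)); auto. exfalso; eauto.
Qed.

Lemma Binf_iso U V h g k : Binf U k -> is_isomorphism U V h -> is_isomorphism V U g ->
  (forall y, univ V y = true -> h (g y) = y) -> Binf V k.
Proof.
  intros B I J HG y Hy H n. rewrite <- (HG y Hy). apply (iso_hasN I).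
  destruct J as [[Hu _] _]; auto.
  apply B. destruct J as [[Hu _] _]; auto. apply (iso_hasN J); auto.
Qed.

Definition Pj U k j w := isl U w && (ty U k w =? j).
Definition rk U k x := cntp (Pj U k (ty U k x)) (lst U x).

Lemma lst_in U x : is_equivalence_structure U -> univ U x = true ->
  univ U (lst U x) = true /\ rel U x (lst U x) = true.
Proof. intros EQ Hx. apply inC_rel. apply (lst_spec EQ Hx). Qed.

Lemma lst_lst U x : is_equivalence_structure U -> univ U x = true -> lst U (lst U x) = lst U x.
Proof. intros EQ Hx. destruct (lst_in EQ Hx). symmetry. apply lst_class; auto. Qed.

Lemma ty_lst U k x : is_equivalence_structure U -> univ U x = true -> ty U k (lst U x) = ty U k x.
Proof. intros EQ Hx. destruct (lst_in EQ Hx). symmetry. apply ty_class; auto. Qed.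

Lemma Pj_lst U k x : is_equivalence_structure U -> univ U x = true -> Pj U k (ty U k x) (lst U x) = true.
Proof.
  intros EQ Hx. unfold Pj, isl. destruct (lst_in EQ Hx). rewrite H, lst_lst, ty_lst, !Nat.eqb_refl; auto.
Qed.

Lemma hasN_ty U k w p : Binf U k -> univ U w = true ->
  (hasN U w (S p) <-> (ty U k w <= k -> S p <= ty U k w)).
Proof.
  intros B Hw. split.
  - intros H L. destruct (le_lt_dec (S p) (S k)).
    + apply (ty_hasN2 (k := k)); auto.
    + exfalso. assert (hasN U w (S k)) by (apply (hasN_le (j := S p)); auto; lia).
      assert (S k <= ty U k w) by (apply ty_hasN2; auto). lia.
  - intros H. destruct (le_lt_dec (ty U k w) k).
    + apply (ty_hasN1 (k := k)); pose proof (ty_le U k w); lia.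
    + apply B; auto. apply (ty_hasN1 (k := k)); pose proof (ty_le U k w); lia.
Qed.

Definition real U k j r p := exists x, univ U x = true /\ ty U k x = j /\ rk U k x = r /\ ps U x = p.
Definition Cond U k j r p :=
  (exists l, NoDup l /\ length l = S r /\ forall w, In w l -> Pj U k j w = true) /\ (j <= k -> S p <= j).

Lemma real_iff U k j r p : is_equivalence_structure U -> Binf U k -> (real U k j r p <-> Cond U k j r p).
Proof.
  intros EQ B. split.
  - intros [x [Hx [Ej [Er Ep]]]]. split.
    + apply cntp_real. exists (lst U x). subst. split. apply Pj_lst; auto. reflexivity.
    + subst. apply (proj1 (@hasN_ty U k x _ B Hx)). apply cntp_real. exists x. split. apply inC_refl; auto. reflexivity.
  - intros [Hl Hp]. apply cntp_real in Hl. destruct Hl as [w [Pw Cw]].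
    unfold Pj, isl in Pw. apply andb_prop in Pw. destruct Pw as [Pw Tw]. apply andb_prop in Pw.
    destruct Pw as [Uw Lw]. apply Nat.eqb_eq in Tw, Lw.
    assert (Hw : hasN U w (S p)). { apply (proj2 (@hasN_ty U k w p B Uw)). rewrite Tw; auto. }
    apply cntp_real in Hw. destruct Hw as [x [Ix Cx]]. destruct (inC_rel Ix) as [Ux Rx].
    exists x. split; auto.
    assert (Tx : ty U k x = j). { rewrite <- Tw. symmetry. apply ty_class; auto. }
    assert (Lx : lst U x = w). { rewrite <- Lw. symmetry. apply lst_class; auto. }
    repeat split; auto.
    + unfold rk. rewrite Tx, Lx. auto.
    + unfold ps, cnt. rewrite <- Cx. apply cntp_ext. intros v _. symmetry. apply inC_class; auto.
Qed.

Lemma rel_from_lst U x y : is_equivalence_structure U -> univ U x = true -> univ U y = true ->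
  lst U x = lst U y -> rel U x y = true.
Proof.
  intros EQ Hx Hy E. destruct (lst_in EQ Hx) as [A B]. destruct (lst_in EQ Hy) as [C D].
  destruct EQ as [R [Sy Tr]]. rewrite <- E in *. apply (Tr x (lst U x) y); auto.
Qed.

Lemma Cond_iso U V h g k j r p : is_equivalence_structure U -> is_isomorphism U V h ->
  is_isomorphism V U g -> (forall x, univ U x = true -> g (h x) = x) ->
  Cond U k j r p -> Cond V k j r p.
Proof.
  intros EQ I J GH [[l [D [L H]]] Hp]. split; auto.
  pose proof (iso_equiv EQ I) as EQV. pose proof I as I0. destruct I as [[Hu [Hi Hr]] Hs].
  assert (PW : forall w, In w l -> univ U w = true /\ lst U w = w /\ ty U k w = j).
  { intros w Hw. specialize (H w Hw). unfold Pj, isl in H.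
    apply andb_prop in H. destruct H as [H1 H2]. apply andb_prop in H1. destruct H1.
    apply Nat.eqb_eq in H0, H2. auto. }
  exists (map (fun w => lst V (h w)) l). repeat split.
  - apply NoDup_map_NoDup_ForallPairs; auto. intros a b Ha Hb E.
    destruct (PW a Ha) as [Ua [La _]]. destruct (PW b Hb) as [Ub [Lb _]].
    rewrite <- La, <- Lb. apply lst_class; auto. rewrite Hr; auto. apply rel_from_lst; auto.
  - rewrite length_map; auto.
  - intros w' Hw'. apply in_map_iff in Hw'. destruct Hw' as [w [E Hw]]. subst.
    destruct (PW w Hw) as [Uw [Lw Tw]]. unfold Pj.
    replace (ty V k (lst V (h w))) with j.
    + rewrite Nat.eqb_refl, andb_true_r. unfold isl. destruct (lst_in EQV (Hu w Uw)). rewrite H0, lst_lst; auto.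
      rewrite Nat.eqb_refl; auto.
    + rewrite ty_lst; auto. rewrite (@iso_ty U V h g k w I0 J GH Uw); auto.
Qed.

Lemma inv_inj U k x y : is_equivalence_structure U -> univ U x = true -> univ U y = true ->
  ty U k x = ty U k y -> rk U k x = rk U k y -> ps U x = ps U y -> x = y.
Proof.
  intros EQ Hx Hy Et Er Ep.
  assert (L : lst U x = lst U y).
  { unfold rk in Er. rewrite Et in Er. apply (cntp_inj (Pj U k (ty U k y))); auto.
    rewrite <- Et at 1. apply Pj_lst; auto. apply Pj_lst; auto. }
  assert (R : rel U x y = true) by (apply rel_from_lst; auto).
  unfold ps, cnt in Ep. rewrite (cntp_ext (inC U y) (inC U x) y) in Ep.
  apply (cntp_inj (inC U x)); auto. apply inC_refl; auto. unfold inC; rewrite Hy, R; auto.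
  intros; symmetry; apply inC_class; auto.
Qed.

Lemma rel_inv U k x y : is_equivalence_structure U -> univ U x = true -> univ U y = true ->
  (rel U x y = true <-> ty U k x = ty U k y /\ rk U k x = rk U k y).
Proof.
  intros EQ Hx Hy. split.
  - intros R. assert (ty U k x = ty U k y) by (apply ty_class; auto). split; auto.
    unfold rk. rewrite H, (lst_class EQ Hx Hy R). auto.
  - intros [Et Er]. apply rel_from_lst; auto. unfold rk in Er. rewrite Et in Er.
    apply (cntp_inj (Pj U k (ty U k y))); auto.
    rewrite <- Et at 1. apply Pj_lst; auto. apply Pj_lst; auto.
Qed.

Unset Implicit Arguments. Set Strict Implicit.
Set Implicit Arguments. Unset Strict Implicit.

Section Iso.
Variables (S T : structure) (h : nat -> nat) (k : nat).
Hypotheses (EQS : is_equivalence_structure S) (BS : Binf S k) (I : is_isomorphism S T h).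

Lemma inv_data : exists g, is_isomorphism T S g /\ (forall x, univ S x = true -> g (h x) = x) /\
  (forall y, univ T y = true -> h (g y) = y) /\ is_equivalence_structure T /\ Binf T k.
Proof.
  destruct (iso_inv I) as [g [J [GH HG]]]. exists g.
  refine (conj J (conj GH (conj HG (conj (iso_equiv EQS I) (Binf_iso BS I J HG))))).
Qed.

Lemma real_ST j r p : real S k j r p <-> real T k j r p.
Proof.
  destruct inv_data as [g [J [GH [HG [EQT BT]]]]].
  rewrite (real_iff j r p EQS BS), (real_iff j r p EQT BT). split.
  - apply (Cond_iso EQS I J GH).
  - apply (Cond_iso EQT J I HG).
Qed.

Definition fiso n := if univ S n then epsilon (inhabits 0) (fun m => univ T m = true /\
  ty T k m = ty S k n /\ rk T k m = rk S k n /\ ps T m = ps S n) else 0.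

Lemma fiso_spec n : univ S n = true -> univ T (fiso n) = true /\
  ty T k (fiso n) = ty S k n /\ rk T k (fiso n) = rk S k n /\ ps T (fiso n) = ps S n.
Proof.
  intros Hn. unfold fiso. rewrite Hn.
  apply (epsilon_spec (inhabits 0) (fun m => univ T m = true /\
    ty T k m = ty S k n /\ rk T k m = rk S k n /\ ps T m = ps S n)).
  destruct (proj1 (real_ST (ty S k n) (rk S k n) (ps S n))) as [y Hy]. exists n; auto. eauto.
Qed.

Lemma fiso_iso : is_isomorphism S T fiso.
Proof.
  destruct inv_data as [g [J [GH [HG [EQT BT]]]]].
  split; [split; [|split]|].
  - intros x Hx. apply fiso_spec; auto.
  - intros x y Hx Hy E. destruct (fiso_spec Hx) as [A [B [C D]]]. destruct (fiso_spec Hy) as [A' [B' [C' D']]].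
    rewrite E in *. apply (@inv_inj S k x y EQS Hx Hy); congruence.
  - intros x y Hx Hy. destruct (fiso_spec Hx) as [A [B [C D]]]. destruct (fiso_spec Hy) as [A' [B' [C' D']]].
    apply eq_true_iff_eq. rewrite (rel_inv k EQS Hx Hy), (rel_inv k EQT A A'). rewrite B, C, B', C'. tauto.
  - intros z Hz. destruct (proj2 (real_ST (ty T k z) (rk T k z) (ps T z))) as [x [Hx [E1 [E2 E3]]]].
    exists z; auto. exists x. split; auto. destruct (fiso_spec Hx) as [A [B [C D]]].
    apply (@inv_inj T k _ _ EQT A Hz); congruence.
Qed.

Definition Ginf n m := if univ S n then univ T m && ((ty S k n =? ty T k m) &&
  ((rk S k n =? rk T k m) && (ps S n =? ps T m))) else m =? 0.

Lemma Ginf_iff n m : Ginf n m = true <-> fiso n = m.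
Proof.
  destruct inv_data as [g [J [GH [HG [EQT BT]]]]].
  unfold Ginf. destruct (univ S n) eqn:Hn.
  - destruct (fiso_spec Hn) as [A [B [C D]]]. split.
    + intros H. repeat (apply andb_prop in H; destruct H as [? H]). apply Nat.eqb_eq in H, H1, H2.
      apply (@inv_inj T k _ _ EQT A); auto; congruence.
    + intros E. subst. rewrite A, B, C, D, !Nat.eqb_refl. auto.
  - unfold fiso. rewrite Hn. rewrite Nat.eqb_eq. split; auto.
Qed.
End Iso.

Definition rkb U k x b := cntp (fun w => isl U w && (tb U k w b =? tb U k x b)) (lst U x).
Definition Gb S T k n m b := if univ S n then univ T m && ((tb S k n b =? tb T k m b) &&
  ((rkb S k n b =? rkb T k m b) && (ps S n =? ps T m))) else m =? 0.

Lemma sumto_ge f n i : i < n -> f i <= sumto f n.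
Proof. induction n; intros H. lia. simpl. destruct (Nat.eq_dec i n). subst; lia. pose proof (IHn ltac:(lia)); lia. Qed.

Lemma cntp_le p N : cntp p N <= N.
Proof. induction N. unfold cntp; simpl; lia. rewrite cntp_S. destruct (p N); lia. Qed.

Lemma lst_le U x : lst U x <= x.
Proof. apply cntp_le. Qed.

Lemma Gb_conv S T k n m : exists s, forall b, s <= b -> Gb S T k n m b = Ginf S T k n m.
Proof.
  exists (sumto (fun w => bstab S k w + bstab T k w) (Datatypes.S (n + m))). intros b Hb.
  assert (HS : forall w, w <= n + m -> tb S k w b = ty S k w).
  { intros w Hw. apply ty_spec. assert (Lw : w < Datatypes.S (n + m)) by lia. pose proof (@sumto_ge (fun w => bstab S k w + bstab T k w) _ _ Lw). cbv beta in H. lia. }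
  assert (HT : forall w, w <= n + m -> tb T k w b = ty T k w).
  { intros w Hw. apply ty_spec. assert (Lw : w < Datatypes.S (n + m)) by lia. pose proof (@sumto_ge (fun w => bstab S k w + bstab T k w) _ _ Lw). cbv beta in H. lia. }
  unfold Gb, Ginf. rewrite HS, HT by lia.
  assert (E1 : rkb S k n b = rk S k n).
  { unfold rkb, rk, Pj. apply cntp_ext. intros w Hw. pose proof (lst_le S n). rewrite !HS by lia. auto. }
  assert (E2 : rkb T k m b = rk T k m).
  { unfold rkb, rk, Pj. apply cntp_ext. intros w Hw. pose proof (lst_le T m). rewrite !HT by lia. auto. }
  rewrite E1, E2. auto.
Qed.

Unset Implicit Arguments. Set Strict Implicit.

Fixpoint liftn (d : nat) (e : exp) : exp :=
  match e with
  | EVar i => if i <? d then EVar i else EVar (S i)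
  | EConst n => EConst n
  | EAdd a b => EAdd (liftn d a) (liftn d b)
  | ESub a b => ESub (liftn d a) (liftn d b)
  | EIsZ a => EIsZ (liftn d a)
  | EIf c t e => EIf (liftn d c) (liftn d t) (liftn d e)
  | EOr a => EOr (liftn d a)
  | ESum b body => ESum (liftn d b) (liftn (S d) body)
  end.

Lemma sumto_ext f g n : (forall i, f i = g i) -> sumto f n = sumto g n.
Proof. intros H; induction n; simpl; auto. Qed.

Lemma sem_liftn X e : forall d pre env v, length pre = d ->
  sem X (pre ++ v :: env) (liftn d e) = sem X (pre ++ env) e.
Proof.
  induction e; intros d pre env v L; simpl; try (rewrite ?IHe, ?IHe1, ?IHe2, ?IHe3 by auto; reflexivity).
  - destruct (Nat.ltb_spec i d).
    + simpl. rewrite !app_nth1 by lia. auto.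
    + simpl. rewrite !app_nth2 by lia. replace (S i - length pre) with (S (i - length pre)) by lia. auto.
  - rewrite IHe1 by auto. apply sumto_ext. intros i. apply (IHe2 (S d) (i :: pre)). simpl; auto.
Qed.

Definition lift := liftn 0.
Lemma sem_lift X e v env : sem X (v :: env) (lift e) = sem X env e.
Proof. apply (sem_liftn X e 0 [] env v); auto. Qed.

Definition b2n (b : bool) := if b then 1 else 0.
Definition EAnd a b := EIf a b (EConst 0).
Definition EEq a b := EIsZ (EAdd (ESub a b) (ESub b a)).
Definition ELe a b := EIsZ (ESub a b).
Definition E4 x := EAdd (EAdd x x) (EAdd x x).
Definition EPair x y := EAdd y (ESum (EAdd y x) (EAdd (EVar 0) (EConst 1))).
Definition EUniv (sd : bool) x := EOr (EAdd (E4 x) (EConst (if sd then 1 else 0))).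
Definition ERel (sd : bool) x y := EOr (EAdd (E4 (EPair x y)) (EConst (if sd then 3 else 2))).

Lemma sem_and X env a b p q : sem X env a = b2n p -> sem X env b = b2n q -> sem X env (EAnd a b) = b2n (p && q).
Proof. intros A B. simpl. rewrite A. destruct p; simpl; auto. Qed.
Lemma sem_eq X env a b : sem X env (EEq a b) = b2n (sem X env a =? sem X env b).
Proof.
  simpl. set (p := sem X env a). set (q := sem X env b).
  destruct (Nat.eqb_spec p q).
  - rewrite e, Nat.sub_diag. auto.
  - destruct (p - q + (q - p)) eqn:E. lia. auto.
Qed.
Lemma sem_le X env a b : sem X env (ELe a b) = b2n (sem X env a <=? sem X env b).
Proof.
  simpl. set (p := sem X env a). set (q := sem X env b).
  destruct (Nat.leb_spec p q).
  - replace (p - q) with 0 by lia. auto.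
  - destruct (p - q) eqn:E. lia. auto.
Qed.

Lemma sumto_tri n : sumto (fun i => i + 1) n * 2 = n * S n.
Proof. induction n; simpl; auto. nia. Qed.

Lemma sem_pair X env x y : sem X env (EPair x y) = to_nat (sem X env x, sem X env y).
Proof.
  change (sem X env (EPair x y)) with (sem X env y + sumto (fun i => i + 1) (sem X env y + sem X env x)).
  pose proof (to_nat_spec (sem X env x) (sem X env y)).
  pose proof (sumto_tri (sem X env y + sem X env x)).
  lia.
Qed.

Definition Orc (SS TT : structure) : oracle := join (diagram SS) (diagram TT).

Lemma orc_univS SS TT x : Orc SS TT (x + x + (x + x) + 0) = univ SS x.
Proof.
  replace (x + x + (x + x) + 0) with (2 * (2 * x)) by lia. unfold Orc, join, diagram.
  rewrite Nat.even_even, Nat.div2_double, Nat.even_even, Nat.div2_double. auto.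
Qed.
Lemma orc_univT SS TT x : Orc SS TT (x + x + (x + x) + 1) = univ TT x.
Proof.
  replace (x + x + (x + x) + 1) with (S (2 * (2 * x))) by lia. unfold Orc, join, diagram.
  rewrite Nat.even_succ, Nat.odd_even, Nat.div2_succ_double, Nat.even_even, Nat.div2_double. auto.
Qed.
Lemma orc_relS SS TT x y : let t := to_nat (x, y) in Orc SS TT (t + t + (t + t) + 2) = rel SS x y.
Proof.
  intros t. replace (t + t + (t + t) + 2) with (2 * S (2 * t)) by lia. unfold Orc, join, diagram.
  rewrite Nat.even_even, Nat.div2_double, Nat.even_succ, Nat.odd_even, Nat.div2_succ_double.
  unfold t. rewrite cancel_of_to. auto.
Qed.
Lemma orc_relT SS TT x y : let t := to_nat (x, y) in Orc SS TT (t + t + (t + t) + 3) = rel TT x y.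
Proof.
  intros t. replace (t + t + (t + t) + 3) with (S (2 * S (2 * t))) by lia. unfold Orc, join, diagram.
  rewrite Nat.even_succ, Nat.odd_even, Nat.div2_succ_double, Nat.even_succ, Nat.odd_even, Nat.div2_succ_double.
  unfold t. rewrite cancel_of_to. auto.
Qed.

Section Blocks.
Variables SS TT : structure.
Let O := Orc SS TT.
Definition Us (sd : bool) := if sd then TT else SS.

Lemma sem_univ env sd x : sem O env (EUniv sd x) = b2n (univ (Us sd) (sem O env x)).
Proof. destruct sd; simpl; unfold O; [rewrite orc_univT|rewrite orc_univS]; auto. Qed.
Lemma sem_rel env sd x y : sem O env (ERel sd x y) = b2n (rel (Us sd) (sem O env x) (sem O env y)).
Proof.
  unfold ERel. destruct sd; cbn [sem]; unfold E4; cbn [sem]; rewrite sem_pair; unfold O;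
  [rewrite orc_relT|rewrite orc_relS]; auto.
Qed.

Definition cntE sd x b := ESum b (EAnd (EUniv sd (EVar 0)) (ERel sd (lift x) (EVar 0))).
Lemma sem_cnt env sd x b : sem O env (cntE sd x b) = cnt (Us sd) (sem O env x) (sem O env b).
Proof.
  unfold cntE, cnt, cntp. cbn [sem]. apply sumto_ext. intros i.
  erewrite sem_and. 2: apply sem_univ. 2: apply sem_rel. rewrite sem_lift. reflexivity.
Qed.

Definition tbE sd k x b := EIf (ELe (cntE sd x b) (EConst k)) (cntE sd x b) (EConst (S k)).
Lemma sem_tb env sd k x b : sem O env (tbE sd k x b) = tb (Us sd) k (sem O env x) (sem O env b).
Proof.
  unfold tbE, tb. cbn [sem]. rewrite sem_le, sem_cnt. cbn [sem].
  destruct (cnt (Us sd) (sem O env x) (sem O env b) <=? k); auto.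
Qed.

Definition lstE sd x := ESum x (EEq (cntE sd (lift x) (EAdd (EVar 0) (EConst 1))) (EConst 0)).
Lemma sem_lst env sd x : sem O env (lstE sd x) = lst (Us sd) (sem O env x).
Proof.
  unfold lstE, lst, cntp. cbn [sem]. apply sumto_ext. intros i.
  rewrite sem_eq, sem_cnt, sem_lift. cbn [sem]. rewrite Nat.add_1_r. reflexivity.
Qed.

Definition islE sd w := EAnd (EUniv sd w) (EEq (lstE sd w) w).
Lemma sem_isl env sd w : sem O env (islE sd w) = b2n (isl (Us sd) (sem O env w)).
Proof. unfold islE, isl. erewrite sem_and. reflexivity. apply sem_univ. rewrite sem_eq, sem_lst. auto. Qed.

Definition rkbE sd k x b := ESum (lstE sd x) (EAnd (islE sd (EVar 0))
  (EEq (tbE sd k (EVar 0) (lift b)) (tbE sd k (lift x) (lift b)))).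
Lemma sem_rkb env sd k x b : sem O env (rkbE sd k x b) = rkb (Us sd) k (sem O env x) (sem O env b).
Proof.
  unfold rkbE, rkb, cntp. cbn [sem]. rewrite sem_lst. apply sumto_ext. intros i.
  erewrite sem_and. reflexivity. apply sem_isl. rewrite sem_eq, !sem_tb, !sem_lift. auto.
Qed.

Definition GE k := EIf (EUniv false (EVar 0))
  (EAnd (EUniv true (EVar 1)) (EAnd (EEq (tbE false k (EVar 0) (EVar 3)) (tbE true k (EVar 1) (EVar 3)))
     (EAnd (EEq (rkbE false k (EVar 0) (EVar 3)) (rkbE true k (EVar 1) (EVar 3)))
           (EEq (cntE false (EVar 0) (EVar 0)) (cntE true (EVar 1) (EVar 1))))))
  (EEq (EVar 1) (EConst 0)).

Lemma sem_G k n m a b : sem O [n; m; a; b] (GE k) = b2n (Gb SS TT k n m b).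
Proof.
  unfold GE, Gb. cbn [sem]. rewrite sem_univ. simpl Us. cbn [sem nth].
  destruct (univ SS n); simpl b2n; cbv iota.
  - erewrite sem_and. reflexivity. apply sem_univ. erewrite sem_and. reflexivity.
    rewrite sem_eq, !sem_tb. auto. erewrite sem_and. reflexivity.
    rewrite sem_eq, !sem_rkb. auto. rewrite sem_eq, !sem_cnt. auto.
  - rewrite sem_eq. auto.
Qed.
End Blocks.

Section Pos.
Variables (SS TT : structure) (h : nat -> nat) (k : nat).
Hypotheses (EQS : is_equivalence_structure SS) (BS : Binf SS k) (I : is_isomorphism SS TT h).

Definition rS := EIf (ELe (EVar 2) (EVar 3)) (ESub (EConst 1) (GE k)) (EConst 0).
Definition rP := ESub (EConst 1) (EAnd (ELe (EVar 2) (EVar 3)) (GE k)).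

Lemma sem_rS n m a b : sem (Orc SS TT) [n; m; a; b] rS =
  if a <=? b then 1 - b2n (Gb SS TT k n m b) else 0.
Proof.
  unfold rS. cbn [sem]. rewrite sem_le. cbn [sem nth]. destruct (a <=? b); simpl b2n; cbv iota; auto.
  cbn [sem]. rewrite sem_G. auto.
Qed.

Lemma sem_rP n m a b : sem (Orc SS TT) [n; m; a; b] rP = 1 - b2n ((a <=? b) && Gb SS TT k n m b).
Proof.
  unfold rP. cbn [sem]. f_equal. erewrite sem_and. reflexivity. rewrite sem_le. auto. apply sem_G.
Qed.

Lemma comp4 e : computable_in (Orc SS TT) 4 (fun xs => sem (Orc SS TT) xs e).
Proof. exists (comp 4 e). intros xs L. rewrite <- L. apply comp_ok. Qed.

Lemma delta : Delta02_fun (join (diagram SS) (diagram TT)) (fiso SS TT k).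
Proof.
  split.
  - exists (fun xs => sem (Orc SS TT) xs rS). split. apply comp4.
    intros n m. destruct (Gb_conv SS TT k n m) as [s Hs]. split.
    + intros E. exists s. intros b. rewrite sem_rS. destruct (Nat.leb_spec s b); auto.
      rewrite Hs by auto. apply (Ginf_iff EQS BS I) in E. rewrite E. auto.
    + intros [a Ha]. specialize (Ha (a + s)). rewrite sem_rS in Ha.
      rewrite (proj2 (Nat.leb_le a (a + s))) in Ha by lia. rewrite Hs in Ha by lia.
      apply (Ginf_iff EQS BS I). destruct (Ginf SS TT k n m); auto. discriminate.
  - exists (fun xs => sem (Orc SS TT) xs rP). split. apply comp4.
    intros n m. destruct (Gb_conv SS TT k n m) as [s Hs]. split.
    + intros E a. exists (a + s). rewrite sem_rP.
      rewrite (proj2 (Nat.leb_le a (a + s))) by lia. rewrite Hs by lia.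
      apply (Ginf_iff EQS BS I) in E. rewrite E. auto.
    + intros Ha. destruct (Ha s) as [b Hb]. rewrite sem_rP in Hb.
      destruct (Nat.leb_spec s b); simpl in Hb; try discriminate.
      rewrite Hs in Hb by auto. apply (Ginf_iff EQS BS I). destruct (Ginf SS TT k n m); auto. discriminate.
Qed.
End Pos.

Theorem positive_part (S : structure) : is_equivalence_structure S -> bounded_character S ->
  rel_Delta02_categorical S.
Proof.
  intros EQ [k Hk] T [h I]. pose proof (Binf_of_bc EQ Hk) as BS.
  exists (fiso S T k). split. apply (fiso_iso EQ BS I). apply (delta S T h k EQ BS I).
Qed.

Definition col z := fst (of_nat z).
Definition row z := snd (of_nat z).

Record st := mk { Rl : list nat; Cl : list (nat * nat); Fl : list nat; Pl : list nat }.

Definition closedb (C : list (nat * nat)) z := existsb (fun ib => (col z =? fst ib) && (snd ib <=? row z)) C.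
Definition present (p : st) z := negb (existsb (Nat.eqb z) (Rl p)) && negb (closedb (Cl p) z).
Definition crel x y := col x =? col y.
Definition Tst (p : st) : structure := Struct (present p) crel.

Lemma present_iff p z : present p z = true <->
  ~ In z (Rl p) /\ forall ib, In ib (Cl p) -> ~ (col z = fst ib /\ snd ib <= row z).
Proof.
  unfold present, closedb. rewrite andb_true_iff, !negb_true_iff. split.
  - intros [A B]. split.
    + intros H. assert (existsb (Nat.eqb z) (Rl p) = true) by (apply existsb_exists; exists z; rewrite Nat.eqb_refl; auto). congruence.
    + intros ib Hib [E L]. assert (G : existsb (fun ib => (col z =? fst ib) && (snd ib <=? row z)) (Cl p) = true).
      { apply existsb_exists. exists ib. split; auto. apply andb_true_iff. split; [apply Nat.eqb_eq | apply Nat.leb_le]; auto. }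
      congruence.
  - intros [A B]. split.
    + destruct (existsb (Nat.eqb z) (Rl p)) eqn:E; auto. apply existsb_exists in E.
      destruct E as [y [Hy E]]. apply Nat.eqb_eq in E. subst. tauto.
    + destruct (existsb _ (Cl p)) eqn:E; auto. apply existsb_exists in E.
      destruct E as [ib [Hib E]]. apply andb_true_iff in E. destruct E as [E1 E2].
      apply Nat.eqb_eq in E1. apply Nat.leb_le in E2. exfalso. apply (B ib); auto.
Qed.

Definition valid p := forall z, In z (Fl p) -> present p z = true.
Definition ext p q := incl (Rl p) (Rl q) /\ incl (Cl p) (Cl q) /\ incl (Fl p) (Fl q) /\ valid q.
Definition avoid p (B : list nat) := forall ib, In ib (Cl p) -> ~ In (fst ib) B.

Lemma ext_refl p : valid p -> ext p p.
Proof. intros; repeat split; auto; apply incl_refl. Qed.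

Lemma ext_trans p q r : ext p q -> ext q r -> ext p r.
Proof. intros [A [B [C D]]] [A' [B' [C' D']]]. repeat split; auto; eapply incl_tran; eauto. Qed.

Lemma ext_present p q z : ext p q -> present q z = true -> present p z = true.
Proof.
  intros [A [B _]] H. apply present_iff in H. apply present_iff. destruct H as [H1 H2]. split; auto.
Qed.

Lemma ext_frozen p q z : ext p q -> In z (Fl p) -> present q z = true.
Proof. intros [_ [_ [C D]]] H. apply D. auto. Qed.

Lemma orc_agree (S T1 T2 : structure) u : rel T1 = rel T2 ->
  univ T1 (Nat.div2 (Nat.div2 u)) = univ T2 (Nat.div2 (Nat.div2 u)) ->
  join (diagram S) (diagram T1) u = join (diagram S) (diagram T2) u.
Proof.
  intros R U. unfold join, diagram. destruct (Nat.even u); auto. destruct (Nat.even (Nat.div2 u)); auto.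
  rewrite R. auto.
Qed.

Definition V_of (U : list nat) := map (fun u => Nat.div2 (Nat.div2 u)) U.

Lemma agree_of (S T1 T2 : structure) U : rel T1 = rel T2 ->
  (forall z, In z (V_of U) -> univ T1 z = univ T2 z) ->
  agree (join (diagram S) (diagram T1)) (join (diagram S) (diagram T2)) U.
Proof.
  intros R H u Hu. symmetry. apply orc_agree; auto. apply H. unfold V_of. apply in_map_iff. eauto.
Qed.

Section Construction.
Variable SA : structure.

Definition O_of (T : structure) := join (diagram SA) (diagram T).

Definition forces q c x m a := forall q', ext q q' -> forall b v,
  eval (O_of (Tst q')) c [x; m; a; b] v -> v = 0.

Definition fresh (C : list (nat * nat)) (P : list nat) := S (list_max (P ++ map fst C)).

Definition Pdec (p : st) (c : code) (t : nat * nat * nat * st) : Prop :=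
  let '(x, m, a, q) := t in
  univ SA x = true /\ ~ finite_set (eq_class SA x) /\ ~ In (col m) (Pl p) /\
  ext p q /\ avoid q (Pl p) /\ forces q c x m a.

Definition bound_of (F : list nat) := S (list_max (map row F)).

Definition dec_step (n : nat) (p : st) : st :=
  let c := decode n in
  let t := epsilon (inhabits (0, 0, 0, p)) (Pdec p c) in
  if excluded_middle_informative (Pdec p c t) then
    let '(x, m, a, q) := t in
    let C' := (col m, bound_of (Fl q)) :: Cl q in
    mk (Rl q) C' (Fl q) (Pl p ++ [fresh C' (Pl p)])
  else mk (Rl p) (Cl p) (Fl p) (Pl p ++ [fresh (Cl p) (Pl p)]).

Definition Ptup (p : st) (c : code) (xs3 : nat * nat * nat) (t : st * nat * nat * list nat) : Prop :=
  let '(x, m, a) := xs3 in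
  let '(q, b, v, U) := t in
  ext p q /\ v <> 0 /\ eval (O_of (Tst q)) c [x; m; a; b] v /\
  forall Y, agree (O_of (Tst q)) Y U -> eval Y c [x; m; a; b] v.

Definition minimize (p q : st) (U : list nat) : st :=
  mk (Rl p ++ filter (fun z => negb (present q z)) (V_of U)) (Cl p)
     (Fl p ++ filter (present q) (V_of U)) (Pl p).

Definition tup_step (w : nat) (p : st) : st :=
  let '(n, r1) := of_nat w in let '(x, r2) := of_nat r1 in let '(m, a) := of_nat r2 in
  let c := decode n in
  let t := epsilon (inhabits (p, 0, 0, [])) (Ptup p c (x, m, a)) in
  if excluded_middle_informative (Ptup p c (x, m, a) t) then
    let '(q, b, v, U) := t in minimize p q U
  else p.

Definition frz_step (w : nat) (p : st) : st :=
  let '(e, j) := of_nat w in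
  if e <? length (Pl p) then
    mk (Rl p) (Cl p) (to_nat (nth e (Pl p) 0, j + S (list_max (Rl p))) :: Fl p) (Pl p)
  else p.

Definition step (s : nat) (p : st) : st :=
  if Nat.even s then dec_step (Nat.div2 s) p
  else let u := fst (of_nat (Nat.div2 s)) in
       if Nat.even u then tup_step (Nat.div2 u) p else frz_step (Nat.div2 u) p.

Fixpoint stage (s : nat) : st :=
  match s with 0 => mk [] [] [] [] | S s => step s (stage s) end.

Definition Inv p := valid p /\ avoid p (Pl p) /\ NoDup (Pl p).

End Construction.

Lemma in_list_max_le l y : In y l -> y <= list_max l.
Proof.
  intros H. assert (A := proj1 (list_max_le l (list_max l)) (le_n _)). rewrite Forall_forall in A. auto.
Qed.

Lemma fresh_spec C P : ~ In (fresh C P) P /\ forall ib, In ib C -> fst ib <> fresh C P.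
Proof.
  unfold fresh. split.
  - intros H. assert (In (S (list_max (P ++ map fst C))) (P ++ map fst C)) by (apply in_or_app; auto).
    apply in_list_max_le in H0. lia.
  - intros ib Hib E. assert (In (fst ib) (P ++ map fst C)) by (apply in_or_app; right; apply in_map; auto).
    apply in_list_max_le in H. lia.
Qed.

Lemma NoDup_snoc (l : list nat) a : NoDup l -> ~ In a l -> NoDup (l ++ [a]).
Proof.
  induction l; intros D N; simpl. constructor. intros []. constructor.
  inversion D; subst. constructor. intros H. apply in_app_or in H. destruct H as [H|[H|[]]]; auto.
  subst. apply N. left; auto. apply IHl; auto. intros H; apply N; right; auto.
Qed.

Lemma present_RC R C F P F' P' z : present (mk R C F P) z = present (mk R C F' P') z.
Proof. reflexivity. Qed.

Lemma col_pair i j : col (to_nat (i, j)) = i.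
Proof. unfold col. rewrite cancel_of_to. auto. Qed.
Lemma row_pair i j : row (to_nat (i, j)) = j.
Proof. unfold row. rewrite cancel_of_to. auto. Qed.

Section Steps.
Variable SA : structure.

Lemma dec_step_props n p : Inv p -> Inv (dec_step SA n p) /\ ext p (dec_step SA n p) /\
  exists a, Pl (dec_step SA n p) = Pl p ++ [a].
Proof.
  intros [Vp [Ap Np]]. unfold dec_step.
  set (t := epsilon _ _). destruct (excluded_middle_informative _) as [Y|N].
  - destruct t as [[[x m] a] q]. destruct Y as [Hx [Hinf [Hm [E [Aq Fq]]]]].
    set (C' := (col m, bound_of (Fl q)) :: Cl q).
    destruct (fresh_spec C' (Pl p)) as [Fr1 Fr2].
    assert (Val : valid (mk (Rl q) C' (Fl q) (Pl p ++ [fresh C' (Pl p)]))).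
    { intros z Hz. simpl in Hz. destruct E as [_ [_ [_ Vq]]]. pose proof (Vq z Hz) as Pz.
      apply present_iff in Pz. apply present_iff. simpl. destruct Pz as [P1 P2]. split; auto.
      intros ib [Eib|Hib].
      - subst ib. simpl. intros [_ L]. unfold bound_of in L.
        assert (In (row z) (map row (Fl q))) by (apply in_map; auto). apply in_list_max_le in H. lia.
      - apply P2; auto. }
    split; [split; [|split]|split].
    + exact Val.
    + intros ib Hib Hin. simpl in Hib, Hin. apply in_app_or in Hin. destruct Hin as [Hin|[Hin|[]]].
      * destruct Hib as [Eib|Hib]. subst ib; simpl in Hin; auto. apply (Aq ib Hib Hin).
      * apply (Fr2 ib); auto.
    + simpl. apply NoDup_snoc; auto.
    + destruct E as [A [B [C D]]]. repeat split; simpl; auto.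
      intros y Hy. right. apply B; auto.
    + eexists. simpl. reflexivity.
  - split; [split; [|split]|split].
    + intros z Hz. simpl in Hz. rewrite (present_RC _ _ _ _ (Fl p) (Pl p)). apply Vp; auto.
    + intros ib Hib Hin. simpl in Hib, Hin. apply in_app_or in Hin. destruct Hin as [Hin|[Hin|[]]].
      apply (Ap ib); auto. apply (proj2 (fresh_spec (Cl p) (Pl p)) ib); auto.
    + simpl. apply NoDup_snoc; auto. apply fresh_spec.
    + repeat split; simpl; try apply incl_refl. intros z Hz. simpl in Hz.
      rewrite (present_RC _ _ _ _ (Fl p) (Pl p)). apply Vp; auto.
    + eexists. simpl. reflexivity.
Qed.

Lemma minimize_present p q U z : ext p q -> present q z = true -> present (minimize p q U) z = true.
Proof.
  intros [A [B _]] H. pose proof H as H0. apply present_iff in H. destruct H as [H1 H2]. apply present_iff. simpl. split.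
  - intros Hz. apply in_app_or in Hz. destruct Hz as [Hz|Hz]. apply H1, A; auto.
    apply filter_In in Hz. destruct Hz as [_ Hz]. rewrite H0 in Hz. discriminate.
  - intros ib Hib. apply H2. apply B; auto.
Qed.

Lemma minimize_absent p q U z : In z (V_of U) -> present q z = false -> present (minimize p q U) z = false.
Proof.
  intros HV H. destruct (present (minimize p q U) z) eqn:E; auto. apply present_iff in E.
  destruct E as [E _]. exfalso. apply E. simpl. apply in_or_app. right. apply filter_In. rewrite H. auto.
Qed.

Lemma minimize_agree p q U z : ext p q -> In z (V_of U) -> present (minimize p q U) z = present q z.
Proof.
  intros E HV. destruct (present q z) eqn:P. apply minimize_present; auto. apply minimize_absent; auto.
Qed.

Lemma minimize_props p q U : Inv p -> ext p q -> Inv (minimize p q U) /\ ext p (minimize p q U).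
Proof.
  intros [Vp [Ap Np]] E.
  assert (Val : valid (minimize p q U)).
  { intros z Hz. simpl in Hz. apply in_app_or in Hz. destruct Hz as [Hz|Hz].
    - apply minimize_present; auto. apply (ext_frozen _ _ _ E); auto.
    - apply filter_In in Hz. apply minimize_present; auto. tauto. }
  split; [split; [|split]|].
  - exact Val.
  - exact Ap.
  - exact Np.
  - repeat split; simpl; auto; intros y Hy; auto; apply in_or_app; auto.
Qed.

Lemma tup_step_props w p : Inv p -> Inv (tup_step SA w p) /\ ext p (tup_step SA w p) /\ Pl (tup_step SA w p) = Pl p.
Proof.
  intros IP. unfold tup_step. destruct (of_nat w) as [n r1]. destruct (of_nat r1) as [x r2].
  destruct (of_nat r2) as [m a].
  set (t := epsilon _ _). destruct (excluded_middle_informative _) as [Y|N].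
  - destruct t as [[[q b] v] U]. destruct Y as [E _]. destruct (minimize_props _ _ U IP E). auto.
  - destruct IP as [V A]. split; [split; auto|split; auto]. apply ext_refl; auto.
Qed.

Lemma frz_step_props w p : Inv p -> Inv (frz_step w p) /\ ext p (frz_step w p) /\ Pl (frz_step w p) = Pl p.
Proof.
  intros [Vp [Ap Np]]. unfold frz_step. destruct (of_nat w) as [e j].
  destruct (Nat.ltb_spec e (length (Pl p))) as [L|L].
  - set (z0 := to_nat (nth e (Pl p) 0, j + S (list_max (Rl p)))).
    assert (Pz : present p z0 = true).
    { apply present_iff. split.
      - intros Hz. apply in_list_max_le in Hz.
        pose proof (to_nat_non_decreasing (nth e (Pl p) 0) (j + S (list_max (Rl p)))). unfold z0 in Hz. lia.
      - intros ib Hib [E1 _]. unfold z0 in E1. rewrite col_pair in E1.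
        apply (Ap ib Hib). rewrite <- E1. apply nth_In; auto. }
    assert (Val : valid (mk (Rl p) (Cl p) (z0 :: Fl p) (Pl p))).
    { intros z [Hz|Hz]; simpl. subst; auto. rewrite (present_RC _ _ _ _ (Fl p) (Pl p)). apply Vp; auto. }
    split; [split; [|split]|split]; auto.
    repeat split; simpl; try apply incl_refl; auto. intros y Hy; right; auto.
  - split; [split; [|split]|split]; auto. apply ext_refl; auto.
Qed.

Lemma step_props s p : Inv p -> Inv (step SA s p) /\ ext p (step SA s p) /\ exists l, Pl (step SA s p) = Pl p ++ l /\ length l = if Nat.even s then 1 else 0.
Proof.
  intros IP. unfold step. destruct (Nat.even s).
  - destruct (dec_step_props (Nat.div2 s) p IP) as [A [B [a C]]]. split; auto. split; auto. exists [a]; auto.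
  - destruct (Nat.even _).
    + destruct (tup_step_props (Nat.div2 (fst (of_nat (Nat.div2 s)))) p IP) as [A [B C]].
      split; auto. split; auto. exists []. rewrite app_nil_r; auto.
    + destruct (frz_step_props (Nat.div2 (fst (of_nat (Nat.div2 s)))) p IP) as [A [B C]].
      split; auto. split; auto. exists []. rewrite app_nil_r; auto.
Qed.

Lemma stage_Inv s : Inv (stage SA s).
Proof.
  induction s. split; [|split]. intros z []. intros ib []. constructor.
  simpl. apply step_props; auto.
Qed.

Lemma stage_ext s : ext (stage SA s) (stage SA (S s)).
Proof. simpl. apply step_props. apply stage_Inv. Qed.

Lemma stage_ext_le s s' : s <= s' -> ext (stage SA s) (stage SA s').
Proof.
  induction 1. apply ext_refl. apply stage_Inv.
  eapply ext_trans; eauto. apply stage_ext.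
Qed.

Lemma stage_P_prefix s s' : s <= s' -> exists l, Pl (stage SA s') = Pl (stage SA s) ++ l.
Proof.
  induction 1. exists []. rewrite app_nil_r; auto.
  destruct IHle as [l Hl]. simpl. destruct (step_props m _ (stage_Inv m)) as [_ [_ [l' [E _]]]].
  exists (l ++ l'). rewrite E, Hl, app_assoc. auto.
Qed.

Lemma stage_len n : length (Pl (stage SA (2 * n))) = n /\ length (Pl (stage SA (S (2 * n)))) = S n.
Proof.
  induction n.
  - simpl. destruct (step_props 0 _ (stage_Inv 0)) as [_ [_ [l [E L]]]]. simpl in *. rewrite E, L. auto.
  - destruct IHn as [_ B]. replace (2 * S n) with (S (S (2 * n))) by lia.
    assert (E1 : length (Pl (stage SA (S (S (2 * n))))) = S n).
    { change (stage SA (S (S (2 * n)))) with (step SA (S (2 * n)) (stage SA (S (2 * n)))). destruct (step_props (S (2 * n)) _ (stage_Inv (S (2 * n)))) as [_ [_ [l [E L]]]].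
      rewrite E, length_app, B, L. rewrite Nat.even_succ, Nat.odd_mul. simpl. lia. }
    split; auto. change (stage SA (S (S (S (2 * n))))) with (step SA (S (S (2 * n))) (stage SA (S (S (2 * n))))). destruct (step_props (S (S (2 * n))) _ (stage_Inv (S (S (2 * n))))) as [_ [_ [l [E L]]]].
    rewrite E, length_app, E1, L. replace (S (S (2 * n))) with (2 * S n) by lia. rewrite Nat.even_mul. simpl. lia.
Qed.
End Steps.

Section Final.
Variable SA : structure.

Definition ufin z : bool :=
  if excluded_middle_informative (forall s, present (stage SA s) z = true) then true else false.
Definition Tfin := Struct ufin crel.

Lemma ufin_true z : ufin z = true <-> forall s, present (stage SA s) z = true.
Proof. unfold ufin. destruct (excluded_middle_informative _); split; auto; discriminate. Qed.

Lemma frozen_fin s z : In z (Fl (stage SA s)) -> ufin z = true.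
Proof.
  intros H. apply (proj2 (ufin_true z)). intros s'. destruct (le_lt_dec s s').
  - apply (ext_frozen _ _ _ (stage_ext_le SA s s' l)); auto.
  - apply (ext_present _ _ _ (stage_ext_le SA s' s (Nat.lt_le_incl _ _ l))).
    apply (stage_Inv SA s); auto.
Qed.

Lemma absent_fin s z : present (stage SA s) z = false -> ufin z = false.
Proof.
  intros H. destruct (ufin z) eqn:E; auto. rewrite (proj1 (ufin_true z) E) in H. discriminate.
Qed.

Lemma absent_later s s' z : s <= s' -> present (stage SA s) z = false -> present (stage SA s') z = false.
Proof.
  intros L H. destruct (present (stage SA s') z) eqn:E; auto.
  rewrite (ext_present _ _ _ (stage_ext_le SA s s' L) E) in H. discriminate.
Qed.

Lemma agree_eventually V : exists s0, forall s, s0 <= s -> forall z, In z V -> present (stage SA s) z = ufin z.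
Proof.
  induction V as [|z V IH].
  - exists 0. intros s _ z [].
  - destruct IH as [s0 H0]. destruct (ufin z) eqn:E.
    + exists s0. intros s Hs y [Ey|Hy]. subst. rewrite E. apply (proj1 (ufin_true y) E). auto.
    + assert (exists s1, present (stage SA s1) z = false).
      { apply NNPP. intros N. assert (ufin z = true). apply (proj2 (ufin_true z)). intros s.
        destruct (present (stage SA s) z) eqn:F; auto. exfalso; eauto. congruence. }
      destruct H as [s1 H1]. exists (s0 + s1). intros s Hs y [Ey|Hy].
      * subst. rewrite E. apply (absent_later s1); auto. lia.
      * apply H0; auto. lia.
Qed.

Lemma transfer_forces q c x m a s1 : forces SA q c x m a -> (forall s, s1 <= s -> ext q (stage SA s)) ->
  forall b v, eval (O_of SA Tfin) c [x; m; a; b] v -> v = 0.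
Proof.
  intros Fq Hq b v Ev. destruct (eval_use _ _ _ _ Ev) as [U HU].
  destruct (agree_eventually (V_of U)) as [s0 H0].
  apply (Fq (stage SA (s0 + s1)) (Hq (s0 + s1) ltac:(lia)) b v). apply HU.
  apply agree_of. reflexivity. intros z Hz. simpl. symmetry. apply H0; auto. lia.
Qed.

Lemma transfer_min s1 q U c xs v : ext (stage SA s1) q ->
  stage SA (S s1) = minimize (stage SA s1) q U ->
  (forall Y, agree (O_of SA (Tst q)) Y U -> eval Y c xs v) -> eval (O_of SA Tfin) c xs v.
Proof.
  intros E St HY. apply HY. apply agree_of. reflexivity. intros z Hz. simpl.
  rewrite <- (minimize_agree _ q U z E Hz). rewrite <- St.
  destruct (present (stage SA (S s1)) z) eqn:P.
  - symmetry. apply (frozen_fin (S s1)). rewrite St. simpl. apply in_or_app. right.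
    apply filter_In. split; auto. rewrite St in P. rewrite (minimize_agree _ q U z E Hz) in P. auto.
  - symmetry. apply (absent_fin (S s1)); auto.
Qed.

Lemma step_even n p : step SA (2 * n) p = dec_step SA n p.
Proof. unfold step. rewrite Nat.even_mul, Nat.div2_double. auto. Qed.

Lemma step_tup s' w p : fst (of_nat s') = 2 * w -> step SA (S (2 * s')) p = tup_step SA w p.
Proof.
  intros E. unfold step. rewrite Nat.even_succ, Nat.odd_mul, Nat.div2_succ_double, E. simpl Nat.odd.
  rewrite Nat.even_mul, Nat.div2_double. auto.
Qed.

Lemma step_frz s' w p : fst (of_nat s') = S (2 * w) -> step SA (S (2 * s')) p = frz_step w p.
Proof.
  intros E. unfold step. rewrite Nat.even_succ, Nat.odd_mul, Nat.div2_succ_double, E. simpl Nat.odd.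
  rewrite Nat.even_succ, Nat.odd_mul, Nat.div2_succ_double. auto.
Qed.

Lemma dec_cases n p :
  (exists x m a q, Pdec SA p (decode n) (x, m, a, q) /\ dec_step SA n p = mk (Rl q) ((col m, bound_of (Fl q)) :: Cl q) (Fl q)
                          (Pl p ++ [fresh ((col m, bound_of (Fl q)) :: Cl q) (Pl p)])) \/
  ~ (exists t, Pdec SA p (decode n) t).
Proof.
  unfold dec_step. set (t := epsilon _ _). destruct (excluded_middle_informative _) as [Y|N].
  - left. destruct t as [[[x m] a] q]. exists x, m, a, q. auto.
  - right. intros Ex. apply N. apply (epsilon_spec (inhabits (0, 0, 0, p)) (Pdec SA p (decode n))). auto.
Qed.

Lemma tup_yes w n r1 x r2 m a p : of_nat w = (n, r1) -> of_nat r1 = (x, r2) -> of_nat r2 = (m, a) ->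
  (exists t, Ptup SA p (decode n) (x, m, a) t) ->
  exists q b v U, Ptup SA p (decode n) (x, m, a) (q, b, v, U) /\ tup_step SA w p = minimize p q U.
Proof.
  intros E1 E2 E3 Ex. unfold tup_step. rewrite E1, E2, E3.
  set (t := epsilon _ _). destruct (excluded_middle_informative _) as [Y|N].
  - destruct t as [[[q b] v] U]. exists q, b, v, U. auto.
  - exfalso. apply N. apply (epsilon_spec (inhabits (p, 0, 0, [])) (Ptup SA p (decode n) (x, m, a))). auto.
Qed.

Lemma frz_in w e j p : of_nat w = (e, j) -> e < length (Pl p) ->
  In (to_nat (nth e (Pl p) 0, j + S (list_max (Rl p)))) (Fl (frz_step w p)).
Proof.
  intros E L. unfold frz_step. rewrite E. destruct (Nat.ltb_spec e (length (Pl p))); [|lia]. left; auto.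
Qed.
End Final.

Definition infP (P : nat -> Prop) := forall N, exists z, N <= z /\ P z.
Definition nxt (P : nat -> Prop) a := epsilon (inhabits 0) (fun z => P z /\ a < z).
Fixpoint enum (P : nat -> Prop) n := match n with 0 => nxt P 0 | S n => nxt P (enum P n) end.

Lemma nxt_spec P a : infP P -> P (nxt P a) /\ a < nxt P a.
Proof.
  intros H. apply (epsilon_spec (inhabits 0) (fun z => P z /\ a < z)).
  destruct (H (S a)) as [z [L Pz]]. exists z. split; auto.
Qed.

Lemma enum_P P n : infP P -> P (enum P n).
Proof. intros H. destruct n; simpl; apply nxt_spec; auto. Qed.

Lemma enum_lt P n n' : infP P -> n < n' -> enum P n < enum P n'.
Proof.
  intros H. induction 1.
  - simpl. apply nxt_spec; auto.
  - simpl. pose proof (proj2 (nxt_spec P (enum P m) H)). lia.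
Qed.

Lemma enum_inj P n n' : infP P -> enum P n = enum P n' -> n = n'.
Proof.
  intros H E. destruct (lt_eq_lt_dec n n') as [[L|L]|L]; auto.
  - pose proof (enum_lt P n n' H L). lia.
  - pose proof (enum_lt P n' n H L). lia.
Qed.

Lemma infP_of_class U x : ~ finite_set (eq_class U x) -> infP (fun y => univ U y = true /\ rel U x y = true).
Proof.
  intros NF N. apply NNPP. intros C. apply NF. exists (seq 0 N). intros y [Hy Ry]. apply in_seq.
  destruct (le_lt_dec N y); [|lia]. exfalso. apply C. exists y. auto.
Qed.

Lemma emb_finite U V f x : is_embedding U V f -> univ U x = true ->
  finite_set (eq_class V (f x)) -> finite_set (eq_class U x).
Proof.
  intros [Hu [Hi Hr]] Hx [l Hl].
  exists (map (fun z => epsilon (inhabits 0) (fun y => eq_class U x y /\ f y = z)) l).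
  intros y [Uy Ry]. apply in_map_iff. exists (f y). split.
  - set (y' := epsilon _ _).
    assert (E : eq_class U x y' /\ f y' = f y).
    { apply (epsilon_spec (inhabits 0) (fun y0 => eq_class U x y0 /\ f y0 = f y)). exists y. split; auto. split; auto. }
    destruct E as [[U' R'] E]. apply Hi; auto.
  - apply Hl. split; auto. rewrite <- Hr; auto.
Qed.

Section Neg.
Variable SA : structure.
Hypotheses (EQ : is_equivalence_structure SA) (IM : infinitely_many_infinite_classes SA).

Definition goodX l x := univ SA x = true /\ ~ finite_set (eq_class SA x) /\ forall y, In y l -> rel SA x y = false.

Lemma goodX_ex l : (forall y, In y l -> univ SA y = true) -> exists x, goodX l x.
Proof.
  intros Hl. apply NNPP. intros N. apply IM. exists l. intros x Hx NF.
  apply NNPP. intros N2. apply N. exists x. split; auto. split; auto. intros y Hy.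
  destruct (rel SA x y) eqn:E; auto. exfalso. apply N2. exists y. auto.
Qed.

Definition newX l := epsilon (inhabits 0) (goodX l).
Fixpoint Xl n := match n with 0 => [] | S n => Xl n ++ [newX (Xl n)] end.
Definition X i := newX (Xl i).

Lemma Xl_univ n : forall y, In y (Xl n) -> univ SA y = true.
Proof.
  induction n; simpl. intros _ [].
  intros y Hy. apply in_app_or in Hy. destruct Hy as [Hy|[Hy|[]]]; auto.
  subst. apply (epsilon_spec (inhabits 0) (goodX (Xl n))). apply goodX_ex; auto.
Qed.

Lemma X_good i : goodX (Xl i) (X i).
Proof. apply (epsilon_spec (inhabits 0) (goodX (Xl i))). apply goodX_ex. apply Xl_univ. Qed.

Lemma Xl_map n : Xl n = map X (seq 0 n).
Proof. induction n; auto. rewrite seq_S, map_app. simpl. rewrite <- IHn. reflexivity. Qed.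

Lemma X_unrel i j : i <> j -> rel SA (X i) (X j) = false.
Proof.
  intros N. destruct EQ as [R [Sy Tr]].
  destruct (lt_eq_lt_dec i j) as [[L|L]|L]; [|lia|].
  - destruct (rel SA (X i) (X j)) eqn:E; auto.
    assert (rel SA (X j) (X i) = false).
    { apply (X_good j). rewrite Xl_map. apply in_map. apply in_seq. lia. }
    rewrite Sy in H; auto; try apply X_good.
  - apply (X_good i). rewrite Xl_map. apply in_map. apply in_seq. lia.
Qed.

Definition PX i := fun y => univ SA y = true /\ rel SA (X i) y = true.
Definition gemb z := enum (PX (col z)) (row z).

Lemma PX_inf i : infP (PX i).
Proof. apply infP_of_class. apply X_good. Qed.

Lemma same_class_X i j y : PX i y -> PX j y -> i = j.
Proof.
  intros [U1 R1] [U2 R2]. destruct (Nat.eq_dec i j); auto. exfalso.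
  destruct EQ as [R [Sy Tr]]. pose proof (X_good i) as [Ui _]. pose proof (X_good j) as [Uj _].
  assert (rel SA (X i) (X j) = true). { apply (Tr _ y _); auto. }
  rewrite X_unrel in H; auto. discriminate.
Qed.

Lemma z_eq z z' : col z = col z' -> row z = row z' -> z = z'.
Proof.
  intros A B. rewrite <- (cancel_to_of z), <- (cancel_to_of z'). unfold col, row in *.
  destruct (of_nat z), (of_nat z'). simpl in *. subst. auto.
Qed.

Lemma gemb_emb : is_embedding (Tfin SA) SA gemb.
Proof.
  split; [|split].
  - intros z _. apply (enum_P _ _ (PX_inf _)).
  - intros z z' _ _ E. unfold gemb in E.
    pose proof (enum_P _ (row z) (PX_inf (col z))) as A. pose proof (enum_P _ (row z') (PX_inf (col z'))) as B.
    rewrite E in A. pose proof (same_class_X _ _ _ A B) as C. rewrite C in E.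
    apply z_eq; auto. apply (enum_inj _ _ _ (PX_inf (col z'))); auto.
  - intros z z' _ _. simpl. unfold crel.
    pose proof (enum_P _ (row z) (PX_inf (col z))) as [A1 A2]. pose proof (enum_P _ (row z') (PX_inf (col z'))) as [B1 B2].
    fold (gemb z) in A1, A2. fold (gemb z') in B1, B2.
    destruct EQ as [R [Sy Tr]]. pose proof (X_good (col z)) as [Ui _]. pose proof (X_good (col z')) as [Uj _].
    destruct (Nat.eqb_spec (col z) (col z')) as [E|E].
    + rewrite E in A2. symmetry. apply (Tr _ (X (col z')) _); auto.
    + destruct (rel SA (gemb z) (gemb z')) eqn:G; auto. exfalso. apply E.
      apply (same_class_X _ _ (gemb z')). split; auto. apply (Tr _ (gemb z) _); auto. split; auto.
Qed.
End Neg.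

Section Neg2.
Variable SA : structure.
Hypotheses (EQ : is_equivalence_structure SA) (IM : infinitely_many_infinite_classes SA).

Definition pi e := nth e (Pl (stage SA (S (2 * e)))) 0.

Lemma pi_stable e s : S (2 * e) <= s -> nth e (Pl (stage SA s)) 0 = pi e.
Proof.
  intros L. destruct (stage_P_prefix SA _ _ L) as [l E]. rewrite E. unfold pi.
  apply app_nth1. rewrite (proj2 (stage_len SA e)). lia.
Qed.

Lemma pi_inj e e' : pi e = pi e' -> e = e'.
Proof.
  intros E. set (s := S (2 * (e + e'))).
  rewrite <- (pi_stable e s), <- (pi_stable e' s) in E by (unfold s; lia).
  destruct (stage_Inv SA s) as [_ [_ ND]].
  assert (Ls : length (Pl (stage SA s)) = S (e + e')) by apply stage_len.
  apply (proj1 (NoDup_nth (Pl (stage SA s)) 0) ND); auto; lia.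
Qed.

Lemma pi_col_inf e : infP (fun z => ufin SA z = true /\ col z = pi e).
Proof.
  intros N. set (w := to_nat (e, N)). set (s' := to_nat (S (2 * w), e)). set (s := S (2 * s')).
  assert (Hs' : e <= s') by (pose proof (to_nat_non_decreasing (S (2 * w)) e); unfold s'; lia).
  assert (F : fst (of_nat s') = S (2 * w)) by (unfold s'; rewrite cancel_of_to; auto).
  assert (L : e < length (Pl (stage SA s))) by (unfold s; rewrite (proj2 (stage_len SA s')); lia).
  set (z := to_nat (nth e (Pl (stage SA s)) 0, N + S (list_max (Rl (stage SA s))))).
  exists z. split; [|split].
  - pose proof (to_nat_non_decreasing (nth e (Pl (stage SA s)) 0) (N + S (list_max (Rl (stage SA s))))). unfold z; lia.
  - apply (frozen_fin SA (S s)). change (stage SA (S s)) with (step SA s (stage SA s)).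
    unfold s at 1. rewrite (step_frz SA s' w (stage SA s) F). apply frz_in; auto.
    unfold w. rewrite cancel_of_to. auto.
  - unfold z. rewrite col_pair. apply pi_stable. unfold s; lia.
Qed.

Definition PF x := fun z => ufin SA z = true /\ col z = pi (lst SA x).
Definition femb x := enum (PF x) x.

Lemma femb_emb : is_embedding SA (Tfin SA) femb.
Proof.
  split; [|split].
  - intros x _. apply (enum_P _ _ (pi_col_inf _)).
  - intros x y Hx Hy E. unfold femb in E.
    pose proof (enum_P _ x (pi_col_inf (lst SA x))) as [_ A]. pose proof (enum_P _ y (pi_col_inf (lst SA y))) as [_ B].
    fold (PF x) in A. fold (PF y) in B. rewrite E in A. rewrite A in B. apply pi_inj in B.
    unfold PF in E. rewrite B in E. apply (enum_inj _ _ _ (pi_col_inf _)) in E. auto.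
  - intros x y Hx Hy. simpl. unfold crel.
    pose proof (enum_P _ x (pi_col_inf (lst SA x))) as [_ A]. pose proof (enum_P _ y (pi_col_inf (lst SA y))) as [_ B].
    fold (PF x) in A. fold (PF y) in B. fold (femb x) in A. fold (femb y) in B. rewrite A, B.
    destruct (rel SA x y) eqn:R.
    + rewrite (lst_class EQ Hx Hy R). symmetry. apply Nat.eqb_refl.
    + destruct (Nat.eqb_spec (pi (lst SA x)) (pi (lst SA y))) as [P|P]; auto.
      apply pi_inj in P. rewrite (rel_from_lst EQ Hx Hy P) in R. discriminate.
Qed.

Lemma bi_emb_fin : bi_embeddable SA (Tfin SA).
Proof. split. exists femb. apply femb_emb. exists (gemb SA). apply gemb_emb; auto. Qed.

Theorem negative_part : ~ rel_Delta02_biemb_categorical SA.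
Proof.
  intros Hc. destruct (Hc _ bi_emb_fin) as [f [g [Ef [Eg [[[r [[c0 Hc0] Hgr]] _] _]]]]].
  assert (Hev : forall x m a b, eval (O_of SA (Tfin SA)) c0 [x; m; a; b] (r [x; m; a; b])).
  { intros. apply Hc0. auto. }
  set (n := enc c0).
  assert (Dn : decode n = c0) by apply decode_enc.
  destruct (dec_cases SA n (stage SA (2 * n))) as [[x [m [a [q [Pd Est]]]]] | Nno].
  - rewrite Dn in Pd. destruct Pd as [Hx [NF [Hm [E [Aq Fq]]]]].
    set (C' := (col m, bound_of (Fl q)) :: Cl q) in *.
    assert (St : stage SA (S (2 * n)) = mk (Rl q) C' (Fl q) (Pl (stage SA (2 * n)) ++ [fresh C' (Pl (stage SA (2 * n)))])).
    { change (stage SA (S (2 * n))) with (step SA (2 * n) (stage SA (2 * n))). rewrite step_even. exact Est. }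
    assert (HQ : forall s, S (2 * n) <= s -> ext q (stage SA s)).
    { intros s Hs. apply ext_trans with (stage SA (S (2 * n))).
      - rewrite St. repeat split; simpl; try apply incl_refl. unfold C'. apply incl_tl, incl_refl.
        destruct (stage_Inv SA (S (2 * n))) as [V _]. rewrite St in V. exact V.
      - apply stage_ext_le; auto. }
    assert (Hall : forall b, r [x; m; a; b] = 0).
    { intros b. apply (transfer_forces SA q c0 x m a (S (2 * n)) Fq HQ b). apply Hev. }
    assert (fxm : f x = m) by (apply Hgr; exists a; auto).
    apply NF. apply (emb_finite _ _ _ _ Ef Hx). rewrite fxm.
    exists (map (fun j => to_nat (col m, j)) (seq 0 (bound_of (Fl q)))).
    intros z [Uz Rz]. simpl in Uz, Rz. unfold crel in Rz. apply Nat.eqb_eq in Rz.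
    apply (proj1 (ufin_true SA z)) with (s := S (2 * n)) in Uz. rewrite St in Uz.
    apply present_iff in Uz. destruct Uz as [_ Uz]. simpl in Uz.
    assert (Lr : row z < bound_of (Fl q)).
    { destruct (le_lt_dec (bound_of (Fl q)) (row z)); auto. exfalso. apply (Uz (col m, bound_of (Fl q))).
      unfold C'. left; auto. simpl. auto. }
    apply in_map_iff. exists (row z). split. apply z_eq; rewrite ?col_pair, ?row_pair; auto.
    apply in_seq. lia.
  - set (B := Pl (stage SA (2 * n))).
    assert (LB : length B = n) by apply stage_len.
    assert (Tx : exists t, t < S n /\ ~ In (col (f (X SA t))) B).
    { apply NNPP. intros N.
      assert (ND : NoDup (map (fun t => col (f (X SA t))) (seq 0 (S n)))).
      { apply NoDup_map_NoDup_ForallPairs; [|apply seq_NoDup]. intros t t' _ _ Et.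
        destruct (Nat.eq_dec t t') as [e|e]; auto. exfalso.
        destruct Ef as [Uf [If Rf]]. pose proof (X_good SA IM t) as [Ut _]. pose proof (X_good SA IM t') as [Ut' _].
        pose proof (Rf _ _ Ut Ut') as R. rewrite (X_unrel SA EQ IM _ _ e) in R. simpl in R. unfold crel in R.
        rewrite Et, Nat.eqb_refl in R. discriminate. }
      assert (incl (map (fun t => col (f (X SA t))) (seq 0 (S n))) B).
      { intros y Hy. apply in_map_iff in Hy. destruct Hy as [t [Et Ht]]. apply in_seq in Ht.
        apply NNPP. intros Ny. apply N. exists t. split. lia. rewrite Et. auto. }
      pose proof (NoDup_incl_length ND H). rewrite length_map, length_seq in H0. lia. }
    destruct Tx as [t [Ht Hn]].
    pose proof (X_good SA IM t) as [Ux [NFx _]].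
    set (x := X SA t) in *. set (m := f x) in *.
    destruct (proj1 (Hgr x m) eq_refl) as [a Ha].
    set (w := to_nat (n, to_nat (x, to_nat (m, a)))). set (s' := to_nat (2 * w, n)). set (s := S (2 * s')).
    assert (Hs' : n <= s') by (pose proof (to_nat_non_decreasing (2 * w) n); unfold s'; lia).
    assert (F : fst (of_nat s') = 2 * w) by (unfold s'; rewrite cancel_of_to; auto).
    assert (NotF : ~ forces SA (stage SA s) c0 x m a).
    { intros Fs. apply Nno.
      destruct (stage_Inv SA s) as [_ [Av _]].
      assert (Lns : 2 * n <= s) by (unfold s; lia).
      destruct (stage_P_prefix SA (2 * n) s Lns) as [l El].
      assert (AvB : avoid (stage SA s) B).
      { intros ib Hib Hin. apply (Av ib Hib). rewrite El. apply in_or_app. auto. }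
      exists (x, m, a, stage SA s). rewrite Dn.
      exact (conj Ux (conj NFx (conj Hn (conj (stage_ext_le SA _ _ Lns) (conj AvB Fs))))). }
    assert (EX : exists q' b v, ext (stage SA s) q' /\ eval (O_of SA (Tst q')) c0 [x; m; a; b] v /\ v <> 0).
    { apply NNPP. intros N. apply NotF. intros q' E b v Ev. destruct (Nat.eq_dec v 0); auto.
      exfalso. apply N. exists q', b, v. auto. }
    destruct EX as [q' [b [v [E [Ev Nv]]]]].
    destruct (eval_use _ _ _ _ Ev) as [U HU].
    assert (Ex : exists t, Ptup SA (stage SA s) (decode n) (x, m, a) t).
    { exists (q', b, v, U). rewrite Dn. simpl. auto. }
    destruct (tup_yes SA w n (to_nat (x, to_nat (m, a))) x (to_nat (m, a)) m a (stage SA s))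
      as [q [b' [v' [U' [Pt Ts]]]]]; try (unfold w; rewrite cancel_of_to; auto); try (rewrite cancel_of_to; auto); auto.
    rewrite Dn in Pt. simpl in Pt. destruct Pt as [E' [Nv' [Ev' HU']]].
    assert (St : stage SA (S s) = minimize (stage SA s) q U').
    { change (stage SA (S s)) with (step SA s (stage SA s)). unfold s at 1. rewrite (step_tup SA s' w _ F). auto. }
    pose proof (transfer_min SA s q U' c0 [x; m; a; b'] v' E' St HU') as Efin.
    pose proof (eval_det _ _ _ _ Efin _ (Hev x m a b')). rewrite (Ha b') in H. auto.
Qed.
End Neg2.

Theorem corollary3p7 (S : structure) :
  is_equivalence_structure S ->
  bounded_character S ->
  infinitely_many_infinite_classes S ->
  rel_Delta02_categorical S /\ ~ rel_Delta02_biemb_categorical S.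
Proof.
  intros EQ BC IM. split.
  - apply positive_part; auto.
  - apply negative_part; auto.
Qed.
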